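(* Let $(\mathcal H,\mathcal B)$ be a commutative nondegenerate combinatorial Hopf algebra over $\mathbb R$, let $\gamma\in(0,1]$ and $N:=\lfloor 1/\gamma\rfloor$. Then every $\gamma$-regular $N$-truncated $\mathcal H$-rough path admits a unique extension to a $\gamma$-regular $\mathcal H$-rough path $\mathbb X$. Moreover, there exists a constant $c>0$ such that $$|\langle\mathbb X_{st},\sigma\rangle|\le c^{|\sigma|}\,q_\gamma(\sigma)\,|t-s|^{\gamma|\sigma|}$$ for all $s,t\in\mathbb R$ and all $\sigma\in\mathcal B$.
   Context: A connected graded Hopf algebra $\mathcal H=\bigoplus_{n\ge0}\mathcal H_n$ has $\mathcal H_0=\mathbb R\mathbf 1$; $|\sigma|$ is the degree of a homogeneous $\sigma$; reduced coproduct $\Delta'(\sigma)=\Delta(\sigma)-\sigma\otimes\mathbf 1-\mathbf 1\otimes\sigma=\sum'_{(\sigma)}\sigma'\otimes\sigma''$ (homogeneous components); convolution $(\phi*\psi)(x)=\sum_{(x)}\phi(x_1)\psi(x_2)$. A combinatorial Hopf algebra $(\mathcal H,\mathcal B)$ is a connected graded Hopf algebra with a basis $\mathcal B=\bigsqcup_n\mathcal B_n$, $\mathcal B_n$ a basis of $\mathcal H_n$, such that $\dim\mathcal H_n\le bC^n$ for some constants $b,C>0$, and the structure constants of product and coproduct in this basis are nonnegative integers. Its inverse-factorial character $q$ is the linear form with $q(\mathbf 1)=1$, $q(\tau)=1$ for $\tau\in\mathcal B_1$, and $q(x)=\frac{1}{2^{|x|}-2}\sum'_{(x)}q(x')q(x'')$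 for homogeneous $x$ of degree $\ge2$. It is nondegenerate if $\mathcal B\cap\mathrm{Prim}(\mathcal H)=\mathcal B_1$. The map $q_\gamma:\mathcal H\to\mathbb R$ is the linear map defined on $\mathcal B$ by $q_\gamma(\sigma)=q(\sigma)$ if $|\sigma|\le N$ and recursively $q_\gamma(\sigma)=\frac{1}{2^{\gamma|\sigma|}-2}\sum'_{(\sigma)}q_\gamma(\sigma')q_\gamma(\sigma'')$ if $|\sigma|\ge N+1$ (note $\gamma(N+1)>1$). A $\gamma$-regular $\mathcal H$-rough path is a family $(\mathbb X_{st})_{s,t\in\mathbb R}$ of linear forms on $\mathcal H$ with $\langle\mathbb X_{st},\mathbf 1\rangle=1$ such that (I) $\langle\mathbb X_{st},\sigma\tau\rangle=\langle\mathbb X_{st},\sigma\rangle\langle\mathbb X_{st},\tau\rangle$ for all $\sigma,\tau\in\mathcal H$; (II) $\mathbb X_{su}*\mathbb X_{ut}=\mathbb X_{st}$ for all $s,u,t$; (III) $\sup_{s\neq t}|\langle\mathbb X_{st},\sigma\rangle|/|t-s|^{\gamma|\sigma|}<\infty$ for every $\sigma\in\mathcal B$. With $\mathcal H^{(N)}=\bigoplus_{k\le N}\mathcal H_k$, a $\gamma$-regular $N$-truncated $\mathcal H$-rough path is a family of linear forms on $\mathcal H^{(N)}$ with $\langle\mathbb X_{st},\mathbf 1\rangle=1$ satisfying (I) for $\sigma\in\mathcal H_p,\tau\in\mathcal H_q$ with $p+q\le N$, (II) with the coproduct restricted to $\mathcal H^{(N)}$, and (III) for $\sigma\in\mathcal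 B_n$, $n\le N$. An extension means a $\gamma$-regular $\mathcal H$-rough path whose restriction to $\mathcal H^{(N)}$ is the given truncated one. *)

(* Defs.v *)
From Stdlib Require Import Reals List Arith.
Import ListNotations.
Open Scope R_scope.

Definition nsum {T : Type} (l : list T) (f : T -> nat) : nat :=
  fold_right (fun x acc => (f x + acc)%nat) 0%nat l.
Definition rsum {T : Type} (l : list T) (f : T -> R) : R :=
  fold_right (fun x acc => f x + acc) 0 l.

(* x^a for x >= 0 and real a, with the convention 0^0 = 1, 0^a = 0 (a <> 0). *)
Definition powR (x a : R) : R :=
  if Req_EM_T x 0 then (if Req_EM_T a 0 then 1 else 0) else Rpower x a.

(* A combinatorial Hopf algebra (H,B) over R, presented through its basis B:
   - cB is the basis B, cdeg the degree, cenum n an enumeration of B_n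
     (so H_n = span of cenum n, finite dimensional);
   - cone is the unit 1, which spans H_0 (B_0 = {1});
   - cmul a b c = coefficient of c in the product a*b  (nonneg. integers);
   - ccop a b c = coefficient of a (x) b in Delta(c)    (nonneg. integers);
   - the counit is eps(1) = 1, eps(b) = 0 for deg b > 0.
   The axioms below are the graded bialgebra axioms written on the basis;
   a connected graded bialgebra automatically has an antipode. *)
Record CHA : Type := {
  cB : Type;
  cB_eq_dec : forall x y : cB, {x = y} + {x <> y};
  cdeg : cB -> nat;
  cenum : nat -> list cB;
  cenum_spec : forall n b, In b (cenum n) <-> cdeg b = n;
  cenum_nodup : forall n, NoDup (cenum n);
  cone : cB;
  cdeg_zero : forall b, cdeg b = 0%nat <-> b = cone;
  cmul : cB -> cB -> cB -> nat;
  ccop : cB -> cB -> cB -> nat;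
  cmul_graded : forall a b c, cmul a b c <> 0%nat -> cdeg c = (cdeg a + cdeg b)%nat;
  ccop_graded : forall a b c, ccop a b c <> 0%nat -> (cdeg a + cdeg b)%nat = cdeg c;
  cmul_assoc : forall a b c e,
    nsum (cenum (cdeg a + cdeg b)) (fun x => cmul a b x * cmul x c e)%nat
    = nsum (cenum (cdeg b + cdeg c)) (fun y => cmul b c y * cmul a y e)%nat;
  cmul_unit_l : forall a c, cmul cone a c = if cB_eq_dec c a then 1%nat else 0%nat;
  cmul_unit_r : forall a c, cmul a cone c = if cB_eq_dec c a then 1%nat else 0%nat;
  ccop_coassoc : forall a b c e,
    nsum (cenum (cdeg a + cdeg b)) (fun x => ccop a b x * ccop x c e)%nat
    = nsum (cenum (cdeg b + cdeg c)) (fun y => ccop b c y * ccop a y e)%nat;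
  ccop_counit_l : forall b c, ccop cone b c = if cB_eq_dec b c then 1%nat else 0%nat;
  ccop_counit_r : forall a c, ccop a cone c = if cB_eq_dec a c then 1%nat else 0%nat;
  (* Delta (x y) = Delta(x) Delta(y), coefficient of a (x) b *)
  cbialg : forall x y a b,
    nsum (cenum (cdeg x + cdeg y)) (fun z => cmul x y z * ccop a b z)%nat
    = nsum (seq 0 (S (cdeg x))) (fun p =>
        nsum (seq 0 (S (cdeg y))) (fun r =>
          nsum (cenum p) (fun a1 =>
            nsum (cenum (cdeg x - p)) (fun b1 =>
              nsum (cenum r) (fun a2 =>
                nsum (cenum (cdeg y - r)) (fun b2 =>
                  ccop a1 b1 x * ccop a2 b2 y * cmul a1 a2 a * cmul b1 b2 b))))))%nat;
  cdim_bound : (exists bb C : R, 0 < bb /\ 0 < C /\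
    forall n, INR (length (cenum n)) <= bb * C ^ n)
}.

Arguments cdeg {_} _.
Arguments cenum {_} _.
Arguments cone {_}.
Arguments cmul {_} _ _ _.
Arguments ccop {_} _ _ _.
Arguments cB_eq_dec {_} _ _.

Definition commutativeCHA (H : CHA) : Prop :=
  forall a b c : cB H, cmul a b c = cmul b a c.

Definition primitive (H : CHA) (s : cB H) : Prop :=
  forall a b : cB H,
    ccop a b s =
      ((if cB_eq_dec a s then if cB_eq_dec b cone then 1 else 0 else 0)
     + (if cB_eq_dec a cone then if cB_eq_dec b s then 1 else 0 else 0))%nat.

Definition nondegenerate (H : CHA) : Prop :=
  forall s : cB H, primitive H s <-> cdeg s = 1%nat.

(* Reduced coproduct sum  Σ'_{(x)} f(x') g(x'')  for a basis element x *)
Definition redsum (H : CHA) (f : cB H -> R) (x : cB H) : R :=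
  rsum (seq 1 (cdeg x - 1)) (fun p =>
    rsum (cenum p) (fun a =>
      rsum (cenum (cdeg x - p)) (fun b => INR (ccop a b x) * f a * f b))).

Fixpoint redrec (H : CHA) (N : nat) (base : cB H -> R) (den : nat -> R)
    (fuel : nat) (x : cB H) : R :=
  match fuel with
  | O => base x
  | S k => if Nat.leb (cdeg x) N then base x
           else den (cdeg x) * redsum H (redrec H N base den k) x
  end.

Definition qchar (H : CHA) (x : cB H) : R :=
  redrec H 1 (fun _ => 1) (fun n => / (2 ^ n - 2)) (cdeg x) x.

Definition qgamma (H : CHA) (gamma : R) (N : nat) (x : cB H) : R :=
  redrec H N (qchar H) (fun n => / (Rpower 2 (gamma * INR n) - 2)) (cdeg x) x.

(* Linear forms on H are given by their values on the basis;
   X s t sigma = <X_st, sigma>. *)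
Definition path (H : CHA) := R -> R -> cB H -> R.

Definition multiplicative_upto (H : CHA) (X : path H) (P : nat -> Prop) : Prop :=
  forall s t (a b : cB H), P (cdeg a + cdeg b)%nat ->
    rsum (cenum (cdeg a + cdeg b)) (fun c => INR (cmul a b c) * X s t c)
    = X s t a * X s t b.

Definition chen_upto (H : CHA) (X : path H) (P : nat -> Prop) : Prop :=
  forall s u t (sg : cB H), P (cdeg sg) ->
    rsum (seq 0 (S (cdeg sg))) (fun p =>
      rsum (cenum p) (fun a =>
        rsum (cenum (cdeg sg - p)) (fun b =>
          INR (ccop a b sg) * X s u a * X u t b)))
    = X s t sg.

Definition holder_upto (H : CHA) (gamma : R) (X : path H) (P : nat -> Prop) : Prop :=
  forall sg : cB H, P (cdeg sg) ->
    exists K : R, forall s t, s <> t ->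
      Rabs (X s t sg) <= K * powR (Rabs (t - s)) (gamma * INR (cdeg sg)).

Definition rough_path (H : CHA) (gamma : R) (X : path H) : Prop :=
  (forall s t, X s t cone = 1) /\
  multiplicative_upto H X (fun _ => True) /\
  chen_upto H X (fun _ => True) /\
  holder_upto H gamma X (fun _ => True).

(* N-truncated: only the values on degrees <= N are meaningful *)
Definition truncated_rough_path (H : CHA) (gamma : R) (N : nat) (X : path H) : Prop :=
  (forall s t, X s t cone = 1) /\
  multiplicative_upto H X (fun n => (n <= N)%nat) /\
  chen_upto H X (fun n => (n <= N)%nat) /\
  holder_upto H gamma X (fun n => (n <= N)%nat).

Definition extends (H : CHA) (N : nat) (X Y : path H) : Prop :=
  forall s t (sg : cB H), (cdeg sg <= N)%nat -> X s t sg = Y s t sg.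

(* Main.v *)
Require Import Defs.
From Stdlib Require Import Reals List Arith.
Open Scope R_scope.

From Stdlib Require Import Lia Lra ZArith Classical ClassicalEpsilon FunctionalExtensionality Setoid Morphisms.
Import ListNotations.
Open Scope R_scope.

Open Scope R_scope.

Section Sums.
Context {T : Type}.

Lemma rsum_nil (f : T -> R) : rsum [] f = 0.
Proof. reflexivity. Qed.
Lemma rsum_cons (x : T) l f : rsum (x :: l) f = f x + rsum l f.
Proof. reflexivity. Qed.
Lemma rsum_app (l1 l2 : list T) f : rsum (l1 ++ l2) f = rsum l1 f + rsum l2 f.
Proof. induction l1; simpl; [ring|]. unfold rsum in *; simpl. rewrite IHl1. ring. Qed.
Lemma rsum_ext (l : list T) f g : (forall x, In x l -> f x = g x) -> rsum l f = rsum l g.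
Proof. induction l; intros Hf; simpl; auto. unfold rsum in *; simpl.
  rewrite (Hf a (or_introl eq_refl)). f_equal. apply IHl. intros; apply Hf; right; auto. Qed.
Lemma rsum_plus (l : list T) f g : rsum l (fun x => f x + g x) = rsum l f + rsum l g.
Proof. induction l; unfold rsum in *; simpl; [ring|]. rewrite IHl; ring. Qed.
Lemma rsum_minus (l : list T) f g : rsum l (fun x => f x - g x) = rsum l f - rsum l g.
Proof. induction l; unfold rsum in *; simpl; [ring|]. rewrite IHl; ring. Qed.
Lemma rsum_scal_l (l : list T) c f : rsum l (fun x => c * f x) = c * rsum l f.
Proof. induction l; unfold rsum in *; simpl; [ring|]. rewrite IHl; ring. Qed.
Lemma rsum_scal_r (l : list T) c f : rsum l (fun x => f x * c) = rsum l f * c.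
Proof. induction l; unfold rsum in *; simpl; [ring|]. rewrite IHl; ring. Qed.
Lemma rsum_zero (l : list T) f : (forall x, In x l -> f x = 0) -> rsum l f = 0.
Proof. intros H. rewrite (rsum_ext l f (fun _ => 0)); auto. induction l; unfold rsum in *; simpl; auto.
  rewrite IHl; [ring|]. intros; apply H; right; auto. Qed.
Lemma rsum_le (l : list T) f g : (forall x, In x l -> f x <= g x) -> rsum l f <= rsum l g.
Proof. induction l; intros H; unfold rsum in *; simpl; [lra|].
  apply Rplus_le_compat; [apply H; left; auto| apply IHl; intros; apply H; right; auto]. Qed.
Lemma rsum_nonneg (l : list T) f : (forall x, In x l -> 0 <= f x) -> 0 <= rsum l f.
Proof. intros H. rewrite <- (rsum_zero l (fun _ => 0)) by auto. apply rsum_le; auto. Qed.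
Lemma rsum_abs (l : list T) f : Rabs (rsum l f) <= rsum l (fun x => Rabs (f x)).
Proof. induction l; unfold rsum in *; simpl. rewrite Rabs_R0; lra.
  eapply Rle_trans; [apply Rabs_triang|]. lra. Qed.
Lemma rsum_delta (l : list T) f x0 : NoDup l -> In x0 l ->
  (forall x, In x l -> x <> x0 -> f x = 0) -> rsum l f = f x0.
Proof. induction l as [|a l IH]; intros Hnd Hin Hz; [destruct Hin|].
  inversion Hnd; subst. rewrite rsum_cons. destruct Hin as [<-|Hin].
  - rewrite rsum_zero; [ring|]. intros x Hx. apply Hz; [right; auto|]. intros ->. contradiction.
  - rewrite IH; auto. rewrite Hz; [ring|left; auto|]. intros ->; contradiction.
    intros x Hx; apply Hz; right; auto. Qed.
Lemma rsum_flat_map {U : Type} (g : U -> list T) (l : list U) f :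
  rsum (flat_map g l) f = rsum l (fun u => rsum (g u) f).
Proof. induction l; simpl; auto. rewrite rsum_app, IHl. reflexivity. Qed.
End Sums.

Lemma rsum_swap {T U : Type} (l1 : list T) (l2 : list U) (f : T -> U -> R) :
  rsum l1 (fun x => rsum l2 (fun y => f x y)) = rsum l2 (fun y => rsum l1 (fun x => f x y)).
Proof. induction l1.
  - rewrite rsum_nil. rewrite rsum_zero; auto.
  - rewrite rsum_cons. rewrite IHl1. rewrite <- rsum_plus. apply rsum_ext; intros; rewrite rsum_cons; reflexivity. Qed.

Lemma INR_nsum {T : Type} (l : list T) f : INR (nsum l f) = rsum l (fun x => INR (f x)).
Proof. induction l; simpl; auto. rewrite plus_INR, IHl. reflexivity. Qed.

Lemma rsum_seq_delta (n d : nat) f : (d < n)%nat -> (forall p, p <> d -> f p = 0) ->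
  rsum (seq 0 n) f = f d.
Proof. intros Hd Hz. apply rsum_delta. apply seq_NoDup. apply in_seq; lia. intros; auto. Qed.

Lemma rsum_perm4 {T : Type} (l : list T) (f : T -> T -> T -> T -> R) :
  rsum l (fun x => rsum l (fun c => rsum l (fun a => rsum l (fun b => f x c a b)))) =
  rsum l (fun a => rsum l (fun b => rsum l (fun c => rsum l (fun x => f x c a b)))).
Proof.
  transitivity (rsum l (fun x => rsum l (fun a => rsum l (fun b => rsum l (fun c => f x c a b))))).
  { apply rsum_ext; intros x _. rewrite rsum_swap. apply rsum_ext; intros a _. apply rsum_swap. }
  rewrite rsum_swap. apply rsum_ext; intros a _. rewrite rsum_swap. apply rsum_ext; intros b _.
  apply rsum_swap.
Qed.

Open Scope R_scope.

Ltac dd := repeat match goal with |- context [cB_eq_dec ?x ?y] => destruct (cB_eq_dec x y); try subst end; try congruence; simpl; try ring.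

Section Hopf.
Variable H : CHA.
Notation B := (cB H).

Definition All (n : nat) : list B := flat_map (@cenum H) (seq 0 (S n)).

Lemma In_All n (x : B) : In x (All n) <-> (cdeg x <= n)%nat.
Proof. unfold All; rewrite in_flat_map. split.
  - intros [p [Hp Hx]]. apply in_seq in Hp. apply cenum_spec in Hx. lia.
  - intros Hx. exists (cdeg x). split. apply in_seq; lia. apply cenum_spec; auto. Qed.

Lemma rsum_All_split n (f : B -> R) : rsum (All n) f = rsum (seq 0 (S n)) (fun p => rsum (cenum p) f).
Proof. apply rsum_flat_map. Qed.

Lemma rsum_All_graded n d (f : B -> R) : (d <= n)%nat -> (forall x, cdeg x <> d -> f x = 0) ->
  rsum (All n) f = rsum (cenum d) f.
Proof. intros Hd Hz. rewrite rsum_All_split.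
  rewrite (rsum_seq_delta (S n) d (fun p => rsum (cenum p) f)); auto; [lia|].
  intros p Hp. apply rsum_zero. intros x Hx. apply cenum_spec in Hx. apply Hz; lia. Qed.

Lemma rsum_All_zero n (f : B -> R) : (forall x, (cdeg x <= n)%nat -> f x = 0) -> rsum (All n) f = 0.
Proof. intros Hz. apply rsum_zero. intros x Hx; apply In_All in Hx; auto. Qed.

Lemma rsum_All_mono n m (f : B -> R) : (n <= m)%nat -> (forall x, (n < cdeg x)%nat -> f x = 0) ->
  rsum (All m) f = rsum (All n) f.
Proof. intros Hnm Hz. unfold All. replace (S m) with (S n + (m - n))%nat by lia.
  rewrite seq_app, flat_map_app, rsum_app. rewrite (rsum_zero (flat_map _ (seq (0 + S n) _))); [ring|].
  intros x Hx. apply in_flat_map in Hx. destruct Hx as [p [Hp Hx]]. apply in_seq in Hp.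
  apply cenum_spec in Hx. apply Hz. lia. Qed.

Lemma rsum_cenum_zero p (f : B -> R) : (forall x : B, cdeg x = p -> f x = 0) -> rsum (@cenum H p) f = 0.
Proof. intros Hz; apply rsum_zero; intros x Hx; apply cenum_spec in Hx; auto. Qed.

Lemma ccop_R0 (a b c : B) : (cdeg a + cdeg b)%nat <> cdeg c -> INR (ccop a b c) = 0.
Proof. intros Hd. destruct (Nat.eq_dec (ccop a b c) 0) as [E|E]. rewrite E; reflexivity.
  exfalso; apply Hd; apply ccop_graded; auto. Qed.
Lemma cmul_R0 (a b c : B) : cdeg c <> (cdeg a + cdeg b)%nat -> INR (cmul a b c) = 0.
Proof. intros Hd. destruct (Nat.eq_dec (cmul a b c) 0) as [E|E]. rewrite E; reflexivity.
  exfalso; apply Hd; apply cmul_graded; auto. Qed.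

Definition conv (F G : B -> R) (s : B) : R :=
  rsum (All (cdeg s)) (fun a => rsum (All (cdeg s)) (fun b => INR (ccop a b s) * F a * G b)).

Lemma conv_big m (F G : B -> R) (s : B) : (cdeg s <= m)%nat ->
  conv F G s = rsum (All m) (fun a => rsum (All m) (fun b => INR (ccop a b s) * F a * G b)).
Proof. intros Hm. unfold conv. symmetry. rewrite (rsum_All_mono (cdeg s) m); auto.
  - apply rsum_ext; intros a Ha. apply rsum_All_mono; auto. intros b Hb. rewrite ccop_R0 by lia. ring.
  - intros a Ha. apply rsum_All_zero. intros b Hb. rewrite ccop_R0 by lia. ring. Qed.

Lemma chen_sum_conv (F G : B -> R) (s : B) :
  rsum (seq 0 (S (cdeg s))) (fun p => rsum (cenum p) (fun a =>
     rsum (cenum (cdeg s - p)) (fun b => INR (ccop a b s) * F a * G b)))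
  = conv F G s.
Proof. unfold conv. rewrite rsum_All_split. apply rsum_ext. intros p Hp. apply in_seq in Hp.
  apply rsum_ext. intros a Ha. apply cenum_spec in Ha. symmetry. apply rsum_All_graded. lia.
  intros b Hb. rewrite ccop_R0 by lia. ring. Qed.

Lemma cenum0_sum (f : B -> R) : rsum (@cenum H 0) f = f cone.
Proof. apply rsum_delta. apply cenum_nodup. apply cenum_spec, cdeg_zero; auto.
  intros x Hx Hne. exfalso. apply cenum_spec, cdeg_zero in Hx. auto. Qed.

Lemma All_delta n (f : B -> R) (x0 : B) : (cdeg x0 <= n)%nat -> (forall x, x <> x0 -> f x = 0) -> rsum (All n) f = f x0.
Proof. intros Hx Hz. rewrite (rsum_All_graded n (cdeg x0)); auto.
  apply rsum_delta. apply cenum_nodup. apply cenum_spec; auto. intros; apply Hz; auto.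
  intros x Hd; apply Hz; intros ->; auto. Qed.

Lemma cone_deg : cdeg (@cone H) = 0%nat.
Proof. apply cdeg_zero; auto. Qed.

Definition red (F G : B -> R) (s : B) : R :=
  rsum (All (cdeg s)) (fun a => rsum (All (cdeg s)) (fun b =>
    if cB_eq_dec a cone then 0 else if cB_eq_dec b cone then 0 else
    INR (ccop a b s) * F a * G b)).

Lemma conv_decomp (F G : B -> R) (s : B) : s <> cone ->
  conv F G s = F s * G cone + F cone * G s + red F G s.
Proof. intros Hs. unfold conv, red.
  assert (E : forall a b, INR (ccop a b s) * F a * G b =
     (if cB_eq_dec a cone then (if cB_eq_dec b s then F cone * G s else 0) else 0)
   + (if cB_eq_dec a cone then 0 else if cB_eq_dec b cone then (if cB_eq_dec a s then F s * G cone else 0) else 0)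
   + (if cB_eq_dec a cone then 0 else if cB_eq_dec b cone then 0 else INR (ccop a b s) * F a * G b)).
  { intros a b. destruct (cB_eq_dec a cone) as [->|Ha].
    - rewrite ccop_counit_l. dd.
    - destruct (cB_eq_dec b cone) as [->|Hb].
      + rewrite ccop_counit_r. dd.
      + ring. }
  rewrite (rsum_ext _ _ (fun a => rsum (All (cdeg s)) (fun b =>
     (if cB_eq_dec a cone then (if cB_eq_dec b s then F cone * G s else 0) else 0)
   + (if cB_eq_dec a cone then 0 else if cB_eq_dec b cone then (if cB_eq_dec a s then F s * G cone else 0) else 0)
   + (if cB_eq_dec a cone then 0 else if cB_eq_dec b cone then 0 else INR (ccop a b s) * F a * G b)))).
  2:{ intros; apply rsum_ext; intros; apply E. }
  rewrite (rsum_ext _ _ (fun a => (rsum (All (cdeg s)) (fun b => (if cB_eq_dec a cone then (if cB_eq_dec b s then F cone * G s else 0) else 0))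
     + rsum (All (cdeg s)) (fun b => (if cB_eq_dec a cone then 0 else if cB_eq_dec b cone then (if cB_eq_dec a s then F s * G cone else 0) else 0)))
     + rsum (All (cdeg s)) (fun b => (if cB_eq_dec a cone then 0 else if cB_eq_dec b cone then 0 else INR (ccop a b s) * F a * G b)))).
  2:{ intros; rewrite <- !rsum_plus; reflexivity. }
  rewrite !rsum_plus.
  assert (E1 : rsum (All (cdeg s)) (fun a => rsum (All (cdeg s)) (fun b =>
      if cB_eq_dec a cone then (if cB_eq_dec b s then F cone * G s else 0) else 0)) = F cone * G s).
  { rewrite (All_delta _ _ cone). destruct (cB_eq_dec cone cone); [|congruence].
    rewrite (All_delta _ _ s); auto. destruct (cB_eq_dec s s); congruence.
    intros x Hx. destruct (cB_eq_dec x s); congruence. rewrite cone_deg; lia.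
    intros x Hx. destruct (cB_eq_dec x cone); [congruence|]. apply rsum_zero; auto. }
  assert (E2 : rsum (All (cdeg s)) (fun a => rsum (All (cdeg s)) (fun b =>
      if cB_eq_dec a cone then 0 else if cB_eq_dec b cone then (if cB_eq_dec a s then F s * G cone else 0) else 0)) = F s * G cone).
  { rewrite (All_delta _ _ s); auto. destruct (cB_eq_dec s cone); [congruence|].
    rewrite (All_delta _ _ cone). destruct (cB_eq_dec cone cone); [|congruence].
    destruct (cB_eq_dec s s); congruence. rewrite cone_deg; lia.
    intros x Hx. destruct (cB_eq_dec x cone); congruence.
    intros x Hx. destruct (cB_eq_dec x cone). apply rsum_zero; auto.
    apply rsum_zero. intros b _. destruct (cB_eq_dec b cone); auto. destruct (cB_eq_dec x s); congruence. }
  rewrite E1, E2. ring. Qed.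

Lemma conv_cone (F G : B -> R) : conv F G cone = F cone * G cone.
Proof. unfold conv. rewrite cone_deg. rewrite (All_delta 0 _ cone). rewrite (All_delta 0 _ cone).
  rewrite ccop_counit_l. destruct (cB_eq_dec cone cone); [simpl; ring|congruence].
  rewrite cone_deg; lia. intros x Hx. rewrite ccop_counit_l. destruct (cB_eq_dec x cone); [congruence|simpl; ring].
  rewrite cone_deg; lia. intros x Hx. apply rsum_zero. intros b Hb. apply In_All in Hb.
  rewrite ccop_R0. ring. rewrite cone_deg. intros Hc. assert (cdeg x = 0%nat) by lia.
  apply cdeg_zero in H0. auto. Qed.

Lemma red_ext (F G F' G' : B -> R) (s : B) : (forall a, (1 <= cdeg a < cdeg s)%nat -> F a = F' a /\ G a = G' a) ->
  red F G s = red F' G' s.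
Proof. intros Hext. unfold red. apply rsum_ext; intros a Ha. apply rsum_ext; intros b Hb.
  destruct (cB_eq_dec a cone) as [|Hac]; auto. destruct (cB_eq_dec b cone) as [|Hbc]; auto.
  destruct (Nat.eq_dec (cdeg a + cdeg b) (cdeg s)) as [E|E]; [|rewrite ccop_R0; auto; ring].
  assert (cdeg a <> 0%nat) by (intro X; apply cdeg_zero in X; auto).
  assert (cdeg b <> 0%nat) by (intro X; apply cdeg_zero in X; auto).
  destruct (Hext a) as [-> _]; [lia|]. destruct (Hext b) as [_ ->]; [lia|]. reflexivity. Qed.

Lemma redsum_red (f : B -> R) (x : B) : redsum H f x = red f f x.
Proof.
  unfold redsum, red.
  destruct (Nat.eq_dec (cdeg x) 0) as [E|E].
  - rewrite E. simpl. symmetry. apply rsum_zero. intros a Ha. apply In_All in Ha.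
    destruct (cB_eq_dec a cone) as [Hac|Hac]. apply rsum_zero; auto. exfalso. apply Hac, cdeg_zero. lia.
  - rewrite rsum_All_split.
    replace (S (cdeg x)) with (1 + ((cdeg x - 1) + 1))%nat by lia.
    rewrite seq_app, seq_app, !rsum_app. simpl (seq 0 1).
    rewrite rsum_cons, rsum_nil, cenum0_sum. destruct (cB_eq_dec cone cone); [|congruence].
    rewrite rsum_zero with (f := fun _ => 0) by auto.
    replace (0 + 1 + (cdeg x - 1))%nat with (cdeg x) by lia. replace (0+1)%nat with 1%nat by lia. simpl (seq (cdeg x) 1).
    rewrite (rsum_cons (cdeg x)), rsum_nil.
    rewrite (rsum_cenum_zero (cdeg x)).
    2:{ intros a Ha. apply rsum_zero; intros b Hb. destruct (cB_eq_dec a cone); auto.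
        destruct (cB_eq_dec b cone); auto. apply In_All in Hb. rewrite ccop_R0; [ring|].
        intro Hd. assert (cdeg b = 0%nat) by lia. apply cdeg_zero in H0. auto. }
    rewrite Rplus_0_l, Rplus_0_l, Rplus_0_r. apply rsum_ext. intros p Hp. apply in_seq in Hp.
    apply rsum_ext. intros a Ha. apply cenum_spec in Ha.
    destruct (cB_eq_dec a cone) as [->|Hac]. rewrite cone_deg in Ha; lia.
    rewrite (rsum_All_graded _ (cdeg x - p)). apply rsum_ext. intros b Hb. apply cenum_spec in Hb.
    destruct (cB_eq_dec b cone) as [->|Hbc]; auto. rewrite cone_deg in Hb; lia. lia. intros b Hb.
    destruct (cB_eq_dec b cone) as [->|Hbc]. auto.
    rewrite ccop_R0; [ring|lia].
Qed.

Lemma conv_assoc (F G K : B -> R) (s : B) :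
  conv (conv F G) K s = conv F (conv G K) s.
Proof.
  set (n := cdeg s).
  assert (L : conv (conv F G) K s = rsum (All n) (fun a => rsum (All n) (fun b => rsum (All n) (fun c =>
     F a * G b * K c * INR (nsum (cenum (cdeg a + cdeg b)) (fun x => ccop a b x * ccop x c s)%nat))))).
  { unfold conv at 1. fold n.
    rewrite (rsum_ext _ _ (fun x => rsum (All n) (fun c => rsum (All n) (fun a => rsum (All n) (fun b =>
        INR (ccop x c s) * (INR (ccop a b x) * F a * G b) * K c))))).
    2:{ intros x Hx. apply In_All in Hx. apply rsum_ext; intros c Hc. rewrite (conv_big n) by auto.
        rewrite <- rsum_scal_l, <- rsum_scal_r. apply rsum_ext; intros a _.
        rewrite <- rsum_scal_l, <- rsum_scal_r. apply rsum_ext; intros b _. reflexivity. }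
    rewrite (rsum_perm4 (All n) (fun x c a b => INR (ccop x c s) * (INR (ccop a b x) * F a * G b) * K c)).
    apply rsum_ext; intros a Ha. apply rsum_ext; intros b Hb. apply rsum_ext; intros c Hc.
    rewrite INR_nsum.
    destruct (le_lt_dec (cdeg a + cdeg b) n) as [Hle|Hlt].
    - rewrite <- (rsum_All_graded n (cdeg a + cdeg b)); auto.
      rewrite <- rsum_scal_l. apply rsum_ext; intros x _. rewrite mult_INR. ring.
      intros x Hx. rewrite mult_INR, ccop_R0; [ring|auto].
    - rewrite rsum_zero. rewrite rsum_zero. ring.
      intros x Hx. apply cenum_spec in Hx. rewrite mult_INR, (ccop_R0 x c s). ring. fold n. lia.
      intros x Hx. apply In_All in Hx. rewrite (ccop_R0 a b x). ring. lia. }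
  assert (R' : conv F (conv G K) s = rsum (All n) (fun a => rsum (All n) (fun b => rsum (All n) (fun c =>
     F a * G b * K c * INR (nsum (cenum (cdeg b + cdeg c)) (fun y => ccop b c y * ccop a y s)%nat))))).
  { unfold conv at 1. fold n.
    rewrite (rsum_ext _ _ (fun a => rsum (All n) (fun y => rsum (All n) (fun b => rsum (All n) (fun c =>
        INR (ccop a y s) * F a * (INR (ccop b c y) * G b * K c)))))).
    2:{ intros a Ha. apply rsum_ext; intros y Hy. apply In_All in Hy. rewrite (conv_big n) by auto.
        rewrite <- rsum_scal_l. apply rsum_ext; intros b _.
        rewrite <- rsum_scal_l. apply rsum_ext; intros c _. reflexivity. }
    apply rsum_ext; intros a Ha. rewrite rsum_swap. apply rsum_ext; intros b Hb.
    rewrite rsum_swap. apply rsum_ext; intros c Hc.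
    rewrite INR_nsum.
    destruct (le_lt_dec (cdeg b + cdeg c) n) as [Hle|Hlt].
    - rewrite <- (rsum_All_graded n (cdeg b + cdeg c)); auto.
      rewrite <- rsum_scal_l. apply rsum_ext; intros x _. rewrite mult_INR. ring.
      intros x Hx. rewrite mult_INR, ccop_R0; [ring|auto].
    - rewrite rsum_zero. rewrite rsum_zero. ring.
      intros x Hx. apply cenum_spec in Hx. rewrite mult_INR, (ccop_R0 a x s). ring. fold n. lia.
      intros x Hx. apply In_All in Hx. rewrite (ccop_R0 b c x). ring. lia. }
  rewrite L, R'. apply rsum_ext; intros a _. apply rsum_ext; intros b _. apply rsum_ext; intros c _.
  rewrite ccop_coassoc. reflexivity.
Qed.

End Hopf.

Open Scope R_scope.

Lemma Rpower_pos x a : 0 < Rpower x a.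
Proof. unfold Rpower; apply exp_pos. Qed.

Lemma powR_nonneg x a : 0 <= powR x a.
Proof. unfold powR. destruct (Req_EM_T x 0); [destruct (Req_EM_T a 0); lra|].
  left; apply Rpower_pos. Qed.

Lemma powR_nz x a : x <> 0 -> powR x a = Rpower x a.
Proof. intros; unfold powR; destruct (Req_EM_T x 0); [contradiction|auto]. Qed.

Lemma powR_0 a : a <> 0 -> powR 0 a = 0.
Proof. intros; unfold powR; destruct (Req_EM_T 0 0); [|lra]. destruct (Req_EM_T a 0); [contradiction|auto]. Qed.

Lemma powR_0r x : powR x 0 = 1.
Proof. unfold powR. destruct (Req_EM_T x 0); destruct (Req_EM_T 0 0); try lra.
  unfold Rpower. rewrite Rmult_0_l. apply exp_0. Qed.

Lemma powR_mult x y a : 0 <= x -> 0 <= y -> 0 < a -> powR (x * y) a = powR x a * powR y a.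
Proof. intros Hx Hy Ha.
  destruct (Req_dec x 0) as [->|Hx0]. rewrite Rmult_0_l, powR_0; lra.
  destruct (Req_dec y 0) as [->|Hy0]. rewrite Rmult_0_r, powR_0; lra.
  rewrite !powR_nz; auto. rewrite Rpower_mult_distr; lra. Qed.

Lemma powR_mono x y a : 0 <= x <= y -> 0 < a -> powR x a <= powR y a.
Proof. intros Hxy Ha. destruct (Req_dec x 0) as [->|Hx0].
  rewrite powR_0 by lra. apply powR_nonneg.
  rewrite !powR_nz by lra. apply Rle_Rpower_l; lra. Qed.

Lemma powR_plus x a b : 0 <= x -> 0 < a -> 0 < b -> powR x (a + b) = powR x a * powR x b.
Proof. intros Hx Ha Hb. destruct (Req_dec x 0) as [->|Hx0]. rewrite !powR_0; lra.
  rewrite !powR_nz by lra. apply Rpower_plus. Qed.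

Lemma powR_1 x : 0 <= x -> powR x 1 = x.
Proof. intros Hx. destruct (Req_dec x 0) as [->|Hx0]. apply powR_0; lra. rewrite powR_nz by lra.
  apply Rpower_1; lra. Qed.

Lemma powR_pow x a k : 0 <= x -> 0 < a -> powR (x ^ k) a = powR x a ^ k.
Proof. intros Hx Ha. induction k; simpl. rewrite powR_nz by lra. unfold Rpower. rewrite Rmult_comm, ln_1, Rmult_0_l, exp_0. auto.
  rewrite powR_mult; auto. rewrite IHk; auto. apply pow_le; auto. Qed.

Definition fl (x : R) : Z := (up x - 1)%Z.
Lemma fl_spec x : IZR (fl x) <= x < IZR (fl x) + 1.
Proof. unfold fl. destruct (archimed x). rewrite minus_IZR. simpl. lra. Qed.
Lemma fl_unique x z : IZR z <= x < IZR z + 1 -> fl x = z.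
Proof. intros Hz. unfold fl. assert (up x = (z + 1)%Z). { symmetry; apply tech_up; rewrite plus_IZR; simpl; lra. }
  lia. Qed.

Fixpoint sumn (n : nat) (f : nat -> R) : R := match n with O => 0 | S n => sumn n f + f n end.

Lemma sumn_abs n f B : (forall i, (i < n)%nat -> Rabs (f i) <= B) -> Rabs (sumn n f) <= INR n * B.
Proof. induction n; intros Hb. simpl. rewrite Rabs_R0; lra.
  cbn [sumn]. rewrite S_INR. eapply Rle_trans; [apply Rabs_triang|].
  assert (Rabs (sumn n f) <= INR n * B) by (apply IHn; intros; apply Hb; lia).
  assert (Rabs (f n) <= B) by (apply Hb; lia). lra. Qed.

Lemma geom_tail (u : nat -> R) (A r : R) : 0 <= A -> 0 <= r < 1 ->
  (forall k, Rabs (u (S k) - u k) <= A * r ^ k) ->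
  forall n j, Rabs (u (n + j)%nat - u n) <= A * r ^ n / (1 - r).
Proof. intros HA Hr Hu n j.
  assert (forall j, Rabs (u (n + j)%nat - u n) <= A * r ^ n * (1 - r ^ j) / (1 - r)).
  { induction j0. rewrite Nat.add_0_r. unfold Rminus. rewrite Rplus_opp_r, Rabs_R0. simpl.
    right; field; lra.
    replace (u (n + S j0)%nat - u n) with ((u (S (n + j0)) - u (n + j0)%nat) + (u (n + j0)%nat - u n))
      by (rewrite Nat.add_succ_r; ring).
    eapply Rle_trans; [apply Rabs_triang|]. specialize (Hu (n + j0)%nat). rewrite pow_add in Hu.
    assert (E : A * r ^ n * (1 - r ^ S j0) / (1 - r) = A * r^n * r^j0 + A * r ^ n * (1 - r ^ j0) / (1 - r)).
    { simpl. field. lra. } rewrite E. lra. }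
  eapply Rle_trans; [apply H|]. unfold Rdiv. apply Rmult_le_compat_r. left; apply Rinv_0_lt_compat; lra.
  assert (0 <= A * r ^ n) by (apply Rmult_le_pos; auto; apply pow_le; lra).
  assert (0 <= r ^ j) by (apply pow_le; lra). nra. Qed.

Lemma geom_cauchy (u : nat -> R) (A r : R) : 0 <= A -> 0 <= r < 1 ->
  (forall k, Rabs (u (S k) - u k) <= A * r ^ k) -> Cauchy_crit u.
Proof. intros HA Hr Hu eps Heps.
  destruct (pow_lt_1_zero r ltac:(rewrite Rabs_right; lra) (eps * (1 - r) / (A + 1))) as [N HN].
  { apply Rdiv_lt_0_compat; [apply Rmult_lt_0_compat; lra|lra]. }
  exists N. intros n m Hn Hm. unfold R_dist.
  assert (Key : forall a b, (a >= N)%nat -> (a <= b)%nat -> Rabs (u b - u a) < eps).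
  { intros a b Ha Hab. replace b with (a + (b - a))%nat by lia. eapply Rle_lt_trans; [apply geom_tail; eauto|].
    specialize (HN a Ha). rewrite Rabs_right in HN by (apply Rle_ge, pow_le; lra).
    apply (Rmult_lt_compat_l (A + 1)) in HN; [|lra].
    replace ((A + 1) * (eps * (1 - r) / (A + 1))) with (eps * (1 - r)) in HN by (field; lra).
    apply Rmult_lt_reg_r with (1 - r); [lra|]. unfold Rdiv. rewrite Rmult_assoc, Rinv_l, Rmult_1_r by lra.
    assert (0 <= r ^ a) by (apply pow_le; lra). nra. }
  destruct (le_lt_dec n m). rewrite Rabs_minus_sym. apply Key; auto.
  apply Key; auto; lia. Qed.

Lemma cv_abs_le (u : nat -> R) l k B : Un_cv u l -> (forall K, (K >= k)%nat -> Rabs (u K) <= B) -> Rabs l <= B.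
Proof. intros Hu Hb. destruct (Rle_dec (Rabs l) B) as [|Hn]; auto. exfalso.
  destruct (Hu (Rabs l - B)) as [N HN]; [lra|]. specialize (HN (max N k) ltac:(lia)).
  specialize (Hb (max N k) ltac:(lia)). unfold R_dist in HN.
  assert (Rabs l <= Rabs (u (max N k)) + Rabs (u (max N k) - l)).
  { replace l with (u (max N k) - (u (max N k) - l)) at 1 by ring.
    eapply Rle_trans; [apply Rabs_triang|]. rewrite Rabs_Ropp. lra. }
  lra. Qed.

Lemma cv_abs_le_c (u : nat -> R) l c k B : Un_cv u l -> (forall K, (K >= k)%nat -> Rabs (u K - c) <= B) -> Rabs (l - c) <= B.
Proof. intros Hu Hb. destruct (Rle_dec (Rabs (l - c)) B) as [|Hn]; auto. exfalso.
  destruct (Hu (Rabs (l - c) - B)) as [N HN]; [lra|]. specialize (HN (max N k) ltac:(lia)).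
  specialize (Hb (max N k) ltac:(lia)). unfold R_dist in HN.
  assert (Rabs (l - c) <= Rabs (u (max N k) - c) + Rabs (u (max N k) - l)).
  { replace (l - c) with ((u (max N k) - c) - (u (max N k) - l)) at 1 by ring.
    eapply Rle_trans; [apply Rabs_triang|]. rewrite Rabs_Ropp. lra. }
  lra. Qed.

Lemma Rabs_eq_0 x : Rabs x = 0 -> x = 0.
Proof. intros H. destruct (Req_dec x 0); auto. exfalso; apply (Rabs_no_R0 x); auto. Qed.

Open Scope R_scope.

Section HopfE.
Variable H : CHA.
Notation B := (cB H).

Lemma conv_ext (F G F' G' : B -> R) (s : B) :
  (forall a, (cdeg a <= cdeg s)%nat -> F a = F' a /\ G a = G' a) -> conv H F G s = conv H F' G' s.
Proof. intros E. unfold conv. apply rsum_ext; intros a Ha. apply rsum_ext; intros b Hb.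
  apply In_All in Ha. apply In_All in Hb. destruct (E a Ha) as [-> _]. destruct (E b Hb) as [_ ->]. auto. Qed.

Lemma red_zero_l (G : B -> R) s : red H (fun _ => 0) G s = 0.
Proof. unfold red. apply rsum_zero; intros; apply rsum_zero; intros. dd. Qed.

Lemma not_cone_deg (a : B) : a <> cone -> (1 <= cdeg a)%nat.
Proof. intros Ha. destruct (Nat.eq_dec (cdeg a) 0) as [E|E]; [|lia]. apply cdeg_zero in E. contradiction. Qed.

Lemma ss_zero (Z : B -> R) (n : nat) : Z cone = 1 ->
  (forall s, (cdeg s <= n)%nat -> Z s = conv H Z Z s) -> forall s, (1 <= cdeg s <= n)%nat -> Z s = 0.
Proof. intros H1 Hc. intros s. remember (cdeg s) as d eqn:Ed. revert s Ed.
  induction d as [d IH] using lt_wf_ind. intros s Ed Hd.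
  assert (Hs : s <> cone) by (intros ->; rewrite cone_deg in Ed; lia).
  pose proof (Hc s ltac:(lia)) as E. rewrite conv_decomp in E by auto.
  rewrite (red_ext H Z Z (fun _ => 0) (fun _ => 0)) in E. rewrite red_zero_l, H1 in E. lra.
  intros a Ha. rewrite (IH (cdeg a)); auto; lia. Qed.

Lemma red_bound (F G w : B -> R) (cc P : R) (s : B) :
  (forall a, 0 <= w a) -> 0 <= cc -> 0 <= P ->
  (forall a b, a <> cone -> b <> cone -> (cdeg a + cdeg b)%nat = cdeg s ->
     Rabs (F a) * Rabs (G b) <= cc * (w a * w b) * P) ->
  Rabs (red H F G s) <= cc * red H w w s * P.
Proof. intros Hw Hc HP Hb. unfold red. eapply Rle_trans; [apply rsum_abs|].
  rewrite <- rsum_scal_l, <- rsum_scal_r. apply rsum_le; intros a Ha.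
  eapply Rle_trans; [apply rsum_abs|].
  rewrite <- rsum_scal_l, <- rsum_scal_r. apply rsum_le; intros b Hb'.
  destruct (cB_eq_dec a cone). rewrite Rabs_R0; lra. destruct (cB_eq_dec b cone). rewrite Rabs_R0; lra.
  rewrite !Rabs_mult, Rabs_right by (apply Rle_ge, pos_INR).
  destruct (Nat.eq_dec (cdeg a + cdeg b) (cdeg s)) as [E|E].
  - specialize (Hb a b n n0 E). pose proof (pos_INR (ccop a b s)).
    replace (cc * (INR (ccop a b s) * w a * w b) * P) with (INR (ccop a b s) * (cc * (w a * w b) * P)) by ring.
    rewrite Rmult_assoc. apply Rmult_le_compat_l; auto.
  - rewrite ccop_R0 by auto. rewrite !Rmult_0_l. rewrite Rmult_0_r, Rmult_0_l. lra. Qed.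

Lemma red_nonneg (w : B -> R) s : (forall a, (cdeg a < cdeg s)%nat -> 0 <= w a) -> 0 <= red H w w s.
Proof. intros Hw. rewrite (red_ext H w w (fun a => Rmax 0 (w a)) (fun a => Rmax 0 (w a))).
  2:{ intros a Ha. rewrite Rmax_right by (apply Hw; lia). auto. }
  assert (Hw' : forall a, 0 <= Rmax 0 (w a)) by (intros; apply Rmax_l). clear Hw. set (w' := fun a => Rmax 0 (w a)) in *. unfold red. apply rsum_nonneg; intros; apply rsum_nonneg; intros. dd; try lra.
  apply Rmult_le_pos; [apply Rmult_le_pos|]; auto. apply pos_INR. apply Hw'. apply Hw'. Qed.

Lemma cocycle_red (U V W SV ST UT : B -> R) (s : B) : s <> cone ->
  U cone = 1 -> V cone = 1 -> W cone = 1 ->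
  (forall a, (cdeg a < cdeg s)%nat -> SV a = conv H U V a /\ UT a = conv H V W a) ->
  red H SV W s + red H U V s = red H U UT s + red H V W s.
Proof. intros Hs HU HV HW Hl. pose proof (conv_assoc H U V W s) as E.
  rewrite !(conv_decomp H _ _ s Hs) in E. rewrite !conv_cone in E.
  rewrite (red_ext H (conv H U V) W SV W) in E. rewrite (red_ext H U (conv H V W) U UT) in E.
  rewrite HU, HV, HW in E. lra.
  intros a Ha; split; auto; symmetry; apply Hl; lia.
  intros a Ha; split; auto; symmetry; apply Hl; lia. Qed.

Lemma rsum_pos {T : Type} (l : list T) f x0 : (forall x, In x l -> 0 <= f x) -> In x0 l -> 0 < f x0 -> 0 < rsum l f.
Proof. induction l; intros H0 Hin Hp; [destruct Hin|]. rewrite rsum_cons. destruct Hin as [<-|Hin].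
  assert (0 <= rsum l f) by (apply rsum_nonneg; intros; apply H0; right; auto). lra.
  assert (0 < rsum l f) by (apply IHl; auto; intros; apply H0; right; auto).
  assert (0 <= f a) by (apply H0; left; auto). lra. Qed.

Lemma nondeg_witness (s : B) : nondegenerate H -> (2 <= cdeg s)%nat ->
  exists a b : B, a <> cone /\ b <> cone /\ ccop a b s <> 0%nat.
Proof. intros Hnd Hd. assert (~ Defs.primitive H s) by (intros P; apply Hnd in P; lia).
  unfold Defs.primitive in H0. apply not_all_ex_not in H0. destruct H0 as [a Ha].
  apply not_all_ex_not in Ha. destruct Ha as [b Hb].
  assert (Hs : s <> cone) by (intros ->; rewrite cone_deg in Hd; lia).
  exists a, b. destruct (cB_eq_dec a cone) as [->|Ha].
  { exfalso; apply Hb. rewrite ccop_counit_l. dd. }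
  destruct (cB_eq_dec b cone) as [->|Hbc].
  { exfalso; apply Hb. rewrite ccop_counit_r. dd. }
  repeat split; auto. intros E; apply Hb. rewrite E. dd. Qed.

Lemma red_pos (w : B -> R) s : nondegenerate H -> (2 <= cdeg s)%nat -> (forall a, 0 <= w a) ->
  (forall a, (1 <= cdeg a < cdeg s)%nat -> 0 < w a) -> 0 < red H w w s.
Proof. intros Hnd Hd Hw Hp. destruct (nondeg_witness s Hnd Hd) as [a [b [Ha [Hb Hc]]]].
  assert (E : (cdeg a + cdeg b)%nat = cdeg s) by (apply ccop_graded; auto).
  pose proof (not_cone_deg a Ha). pose proof (not_cone_deg b Hb).
  unfold red. apply rsum_pos with a. intros; apply rsum_nonneg; intros. dd; try lra.
  apply Rmult_le_pos; [apply Rmult_le_pos|]; auto. apply pos_INR.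
  apply In_All; lia. apply rsum_pos with b. intros; dd; try lra.
  apply Rmult_le_pos; [apply Rmult_le_pos|]; auto. apply pos_INR. apply In_All; lia.
  dd. apply Rmult_lt_0_compat; [apply Rmult_lt_0_compat|]. apply lt_0_INR; lia.
  apply Hp; lia. apply Hp; lia. Qed.

Lemma redrec_stable N' base den : forall k k' (s : B), (cdeg s <= k)%nat -> (cdeg s <= k')%nat ->
  redrec H N' base den k s = redrec H N' base den k' s.
Proof. induction k; intros k' s Hk Hk'.
  - assert (cdeg s = 0%nat) by lia. destruct k'; simpl; auto. rewrite H0. simpl. auto.
  - destruct k'. assert (cdeg s = 0%nat) by lia. simpl. rewrite H0. simpl. auto.
    simpl. destruct (Nat.leb (cdeg s) N'); auto. f_equal. rewrite !redsum_red.
    apply red_ext. intros a Ha. split; apply IHk; lia. Qed.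

Lemma redrec_unfold N' base den (s : B) :
  redrec H N' base den (cdeg s) s =
  if Nat.leb (cdeg s) N' then base s else den (cdeg s) * red H (fun a => redrec H N' base den (cdeg a) a) (fun a => redrec H N' base den (cdeg a) a) s.
Proof. destruct (cdeg s) eqn:E.
  - simpl. reflexivity.
  - cbn [redrec]. rewrite E. destruct (Nat.leb (S n) N'); auto. f_equal. rewrite redsum_red. apply red_ext.
    intros a Ha. split; apply redrec_stable; lia. Qed.

Lemma qchar_unfold (s : B) : qchar H s = if Nat.leb (cdeg s) 1 then 1 else / (2 ^ cdeg s - 2) * red H (qchar H) (qchar H) s.
Proof. unfold qchar. rewrite redrec_unfold. reflexivity. Qed.

Lemma qgamma_unfold g N (s : B) : qgamma H g N s = if Nat.leb (cdeg s) N then qchar H s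
  else / (Rpower 2 (g * INR (cdeg s)) - 2) * red H (qgamma H g N) (qgamma H g N) s.
Proof. unfold qgamma. rewrite redrec_unfold. reflexivity. Qed.

Lemma qchar_nonneg (s : B) : 0 <= qchar H s.
Proof. remember (cdeg s) as d. revert s Heqd. induction d as [d IH] using lt_wf_ind. intros s Ed.
  rewrite qchar_unfold. destruct (Nat.leb (cdeg s) 1) eqn:E; [lra|]. apply Nat.leb_gt in E.
  apply Rmult_le_pos. left; apply Rinv_0_lt_compat. assert (4 <= 2 ^ cdeg s).
  { replace (cdeg s) with (2 + (cdeg s - 2))%nat by lia. rewrite pow_add.
    assert (1 <= 2 ^ (cdeg s - 2)) by (apply pow_R1_Rle; lra). simpl. lra. } lra.
  apply red_nonneg. intros a Ha. apply (IH (cdeg a)); [lia|auto]. Qed.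

Lemma qchar_pos (s : B) : nondegenerate H -> (1 <= cdeg s)%nat -> 0 < qchar H s.
Proof. intros Hnd. remember (cdeg s) as d. revert s Heqd. induction d as [d IH] using lt_wf_ind. intros s Ed Hd.
  rewrite qchar_unfold. destruct (Nat.leb (cdeg s) 1) eqn:E; [lra|]. apply Nat.leb_gt in E.
  apply Rmult_lt_0_compat. apply Rinv_0_lt_compat. assert (4 <= 2 ^ cdeg s).
  { replace (cdeg s) with (2 + (cdeg s - 2))%nat by lia. rewrite pow_add.
    assert (1 <= 2 ^ (cdeg s - 2)) by (apply pow_R1_Rle; lra). simpl. lra. } lra.
  apply red_pos; auto. apply qchar_nonneg. intros a Ha. apply (IH (cdeg a)); auto; lia. Qed.

Lemma qgamma_nonneg g N (s : B) : (forall n, (N < n)%nat -> 2 < Rpower 2 (g * INR n)) -> 0 <= qgamma H g N s.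
Proof. intros Hg. remember (cdeg s) as d. revert s Heqd. induction d as [d IH] using lt_wf_ind. intros s Ed.
  rewrite qgamma_unfold. destruct (Nat.leb (cdeg s) N) eqn:E. apply qchar_nonneg. apply Nat.leb_gt in E.
  apply Rmult_le_pos. left; apply Rinv_0_lt_compat. specialize (Hg _ E). lra.
  apply red_nonneg. intros a Ha. apply (IH (cdeg a)); [lia|auto]. Qed.
End HopfE.

Open Scope R_scope.

#[local] Instance rsum_proper {T : Type} : Proper (eq ==> pointwise_relation T eq ==> eq) (@rsum T).
Proof. intros l l' <- f g Hfg. apply rsum_ext; intros; apply Hfg. Qed.

Lemma rsum_pull2 {T1 T2 T3 : Type} (l1 : list T1) (l2 : list T2) (l3 : list T3) (f : T1 -> T2 -> T3 -> R) :
  rsum l1 (fun x => rsum l2 (fun y => rsum l3 (fun w => f x y w))) =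
  rsum l3 (fun w => rsum l1 (fun x => rsum l2 (fun y => f x y w))).
Proof. transitivity (rsum l1 (fun x => rsum l3 (fun w => rsum l2 (fun y => f x y w)))).
  apply rsum_ext; intros; apply rsum_swap. apply rsum_swap. Qed.

Lemma rsum_prod {T U : Type} (l1 : list T) (l2 : list U) f g :
  rsum l1 (fun x => rsum l2 (fun y => f x * g y)) = rsum l1 f * rsum l2 g.
Proof. rewrite <- rsum_scal_r. apply rsum_ext; intros x _. apply rsum_scal_l. Qed.

Section HopfM.
Variable H : CHA.
Notation B := (cB H).

Lemma graded_double (d m : nat) (Phi : B -> B -> R) : (d <= m)%nat ->
  (forall a b, (cdeg a + cdeg b)%nat <> d -> Phi a b = 0) ->
  rsum (seq 0 (S d)) (fun p => rsum (cenum p) (fun a => rsum (cenum (d - p)) (fun b => Phi a b)))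
  = rsum (All H m) (fun a => rsum (All H m) (fun b => Phi a b)).
Proof. intros Hdm Hz. transitivity (rsum (All H d) (fun a => rsum (All H d) (fun b => Phi a b))).
  - rewrite rsum_All_split. apply rsum_ext; intros p Hp. apply in_seq in Hp.
    apply rsum_ext; intros a Ha. apply cenum_spec in Ha. symmetry. apply rsum_All_graded. lia.
    intros b Hb. apply Hz. lia.
  - symmetry. rewrite (rsum_All_mono H d m); auto.
    + apply rsum_ext; intros a _. apply rsum_All_mono; auto. intros b Hb; apply Hz; lia.
    + intros a Ha. apply rsum_zero; intros b _. apply Hz; lia. Qed.

Lemma ccop_nz (a b c : B) : INR (ccop a b c) <> 0 -> (cdeg a + cdeg b)%nat = cdeg c.
Proof. intros Hn. destruct (Nat.eq_dec (cdeg a + cdeg b) (cdeg c)); auto. exfalso; apply Hn, ccop_R0; auto. Qed.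
Lemma cmul_nz (a b c : B) : INR (cmul a b c) <> 0 -> cdeg c = (cdeg a + cdeg b)%nat.
Proof. intros Hn. destruct (Nat.eq_dec (cdeg c) (cdeg a + cdeg b)); auto. exfalso; apply Hn, cmul_R0; auto. Qed.

Lemma bialg_All (x y a b : B) m : (cdeg x + cdeg y <= m)%nat ->
  rsum (All H m) (fun z => INR (cmul x y z) * INR (ccop a b z)) =
  rsum (All H m) (fun a1 => rsum (All H m) (fun b1 => rsum (All H m) (fun a2 => rsum (All H m) (fun b2 =>
    INR (ccop a1 b1 x) * INR (ccop a2 b2 y) * INR (cmul a1 a2 a) * INR (cmul b1 b2 b))))).
Proof. intros Hm. pose proof (cbialg H x y a b) as E. apply (f_equal INR) in E.
  repeat setoid_rewrite INR_nsum in E. repeat setoid_rewrite mult_INR in E.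
  rewrite (rsum_All_graded H m (cdeg x + cdeg y)); auto.
  2:{ intros z Hz. rewrite cmul_R0 by auto. ring. }
  rewrite E. clear E.
  transitivity (rsum (seq 0 (S (cdeg x))) (fun p => rsum (cenum p) (fun a1 => rsum (cenum (cdeg x - p)) (fun b1 =>
    rsum (All H m) (fun a2 => rsum (All H m) (fun b2 =>
    INR (ccop a1 b1 x) * INR (ccop a2 b2 y) * INR (cmul a1 a2 a) * INR (cmul b1 b2 b))))))).
  { apply rsum_ext; intros p _. rewrite rsum_swap. apply rsum_ext; intros a1 _. rewrite rsum_swap.
    apply rsum_ext; intros b1 _. apply graded_double. lia. intros a2 b2 Hd. rewrite (ccop_R0 H a2 b2 y) by auto. ring. }
  apply graded_double. lia. intros a1 b1 Hd. apply rsum_zero; intros; apply rsum_zero; intros.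
  rewrite (ccop_R0 H a1 b1 x) by auto. ring.
Qed.
End HopfM.

Section HopfM2.
Variable H : CHA.
Notation B := (cB H).

Lemma cone_unique_deg (x : B) : cdeg x = 0%nat -> x = cone.
Proof. apply cdeg_zero. Qed.

Lemma mult_step (a b : B) (U V W : B -> R) :
  a <> cone -> b <> cone -> U cone = 1 -> V cone = 1 ->
  (forall c, (cdeg c <= cdeg a + cdeg b)%nat -> W c = conv H U V c) ->
  (forall x y, (cdeg x + cdeg y < cdeg a + cdeg b)%nat ->
     rsum (All H (cdeg a + cdeg b)) (fun z => INR (cmul x y z) * U z) = U x * U y) ->
  (forall x y, (cdeg x + cdeg y < cdeg a + cdeg b)%nat ->
     rsum (All H (cdeg a + cdeg b)) (fun z => INR (cmul x y z) * V z) = V x * V y) ->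
  rsum (All H (cdeg a + cdeg b)) (fun z => INR (cmul a b z) * W z) - W a * W b =
  (rsum (All H (cdeg a + cdeg b)) (fun z => INR (cmul a b z) * U z) - U a * U b) +
  (rsum (All H (cdeg a + cdeg b)) (fun z => INR (cmul a b z) * V z) - V a * V b).
Proof.
  intros Ha Hb HU HV HW HmU HmV. set (n := (cdeg a + cdeg b)%nat) in *.
  pose proof (not_cone_deg H a Ha) as Da. pose proof (not_cone_deg H b Hb) as Db.
  set (L := All H n).
  set (PU := fun a1 a2 => rsum L (fun x => INR (cmul a1 a2 x) * U x)).
  set (PV := fun b1 b2 => rsum L (fun y => INR (cmul b1 b2 y) * V y)).
  set (T := fun a1 b1 a2 b2 => INR (ccop a1 b1 a) * INR (ccop a2 b2 b)).
  assert (S1 : rsum L (fun z => INR (cmul a b z) * W z) =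
     rsum L (fun a1 => rsum L (fun b1 => rsum L (fun a2 => rsum L (fun b2 => T a1 b1 a2 b2 * PU a1 a2 * PV b1 b2))))).
  { transitivity (rsum L (fun z => rsum L (fun x => rsum L (fun y => INR (cmul a b z) * INR (ccop x y z) * (U x * V y))))).
    { apply rsum_ext; intros z Hz. apply In_All in Hz. rewrite HW by auto. rewrite (conv_big H n) by auto.
      rewrite <- rsum_scal_l. apply rsum_ext; intros x _. rewrite <- rsum_scal_l. apply rsum_ext; intros y _. ring. }
    rewrite rsum_pull2. rewrite rsum_pull2.
    transitivity (rsum L (fun x => rsum L (fun y => (U x * V y) * rsum L (fun a1 => rsum L (fun b1 => rsum L (fun a2 => rsum L (fun b2 =>
       INR (ccop a1 b1 a) * INR (ccop a2 b2 b) * INR (cmul a1 a2 x) * INR (cmul b1 b2 y)))))))).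
    { apply rsum_ext; intros x _. apply rsum_ext; intros y _. unfold L. rewrite <- (bialg_All H a b x y n) by lia. fold L.
      rewrite <- rsum_scal_l. apply rsum_ext; intros z _. ring. }
    transitivity (rsum L (fun x => rsum L (fun y => rsum L (fun a1 => rsum L (fun b1 => rsum L (fun a2 => rsum L (fun b2 =>
       (U x * V y) * (INR (ccop a1 b1 a) * INR (ccop a2 b2 b) * INR (cmul a1 a2 x) * INR (cmul b1 b2 y))))))))).
    { apply rsum_ext; intros x _. apply rsum_ext; intros y _. rewrite <- rsum_scal_l. apply rsum_ext; intros a1 _.
      rewrite <- rsum_scal_l. apply rsum_ext; intros b1 _. rewrite <- rsum_scal_l. apply rsum_ext; intros a2 _.
      rewrite <- rsum_scal_l. reflexivity. }
    rewrite rsum_pull2. apply rsum_ext; intros a1 _.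
    rewrite rsum_pull2. apply rsum_ext; intros b1 _.
    rewrite rsum_pull2. apply rsum_ext; intros a2 _.
    rewrite rsum_pull2. apply rsum_ext; intros b2 _.
    unfold T, PU, PV. rewrite Rmult_assoc, <- rsum_prod, <- rsum_scal_l. apply rsum_ext; intros x _.
    rewrite <- rsum_scal_l. apply rsum_ext; intros y _. ring. }
  set (MU := PU a b - U a * U b). set (MV := PV a b - V a * V b).
  set (D1 := fun a1 a2 : B => if cB_eq_dec a1 a then if cB_eq_dec a2 b then 1 else 0 else 0).
  set (D2 := fun b1 b2 : B => if cB_eq_dec b1 a then if cB_eq_dec b2 b then 1 else 0 else 0).
  assert (S2 : forall a1 b1 a2 b2, T a1 b1 a2 b2 * PU a1 a2 * PV b1 b2 =
     T a1 b1 a2 b2 * (U a1 * U a2 + D1 a1 a2 * MU) * (V b1 * V b2 + D2 b1 b2 * MV)).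
  { intros a1 b1 a2 b2. destruct (Req_dec (T a1 b1 a2 b2) 0) as [E|E]. rewrite E; ring.
    unfold T in E. assert (E1 : INR (ccop a1 b1 a) <> 0) by (intro X; apply E; rewrite X; ring).
    assert (E2 : INR (ccop a2 b2 b) <> 0) by (intro X; apply E; rewrite X; ring).
    apply ccop_nz in E1. apply ccop_nz in E2.
    assert (P1 : PU a1 a2 = U a1 * U a2 + D1 a1 a2 * MU).
    { destruct (Nat.eq_dec (cdeg a1 + cdeg a2) n) as [Eq|Eq].
      - assert (b1 = cone) by (apply cdeg_zero; lia). assert (b2 = cone) by (apply cdeg_zero; lia). subst b1 b2.
        assert (a1 = a). { destruct (cB_eq_dec a1 a); auto. exfalso. assert (X := E1). clear X.
          pose proof (ccop_counit_r H a1 a). destruct (cB_eq_dec a1 a); [contradiction|].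
          assert (INR (ccop a1 cone a) = 0) by (rewrite H0; reflexivity). unfold T in E. rewrite H1 in E. apply E; ring. }
        assert (a2 = b). { destruct (cB_eq_dec a2 b); auto. exfalso.
          pose proof (ccop_counit_r H a2 b). destruct (cB_eq_dec a2 b); [contradiction|].
          assert (INR (ccop a2 cone b) = 0) by (rewrite H1; reflexivity). unfold T in E. rewrite H2 in E. apply E; ring. }
        subst. unfold D1, MU. dd.
      - unfold PU. rewrite HmU by lia. unfold D1. dd. all: exfalso; unfold n in *; lia. }
    assert (P2 : PV b1 b2 = V b1 * V b2 + D2 b1 b2 * MV).
    { destruct (Nat.eq_dec (cdeg b1 + cdeg b2) n) as [Eq|Eq].
      - assert (a1 = cone) by (apply cdeg_zero; lia). assert (a2 = cone) by (apply cdeg_zero; lia). subst a1 a2.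
        assert (b1 = a). { destruct (cB_eq_dec b1 a); auto. exfalso.
          pose proof (ccop_counit_l H b1 a). destruct (cB_eq_dec b1 a); [contradiction|].
          assert (INR (ccop cone b1 a) = 0) by (rewrite H0; reflexivity). unfold T in E. rewrite H1 in E. apply E; ring. }
        assert (b2 = b). { destruct (cB_eq_dec b2 b); auto. exfalso.
          pose proof (ccop_counit_l H b2 b). destruct (cB_eq_dec b2 b); [contradiction|].
          assert (INR (ccop cone b2 b) = 0) by (rewrite H1; reflexivity). unfold T in E. rewrite H2 in E. apply E; ring. }
        subst. unfold D2, MV. dd.
      - unfold PV. rewrite HmV by lia. unfold D2. dd. all: exfalso; unfold n in *; lia. }
    rewrite P1, P2. ring. }
  set (s4 := fun f : B -> B -> B -> B -> R => rsum L (fun a1 => rsum L (fun b1 => rsum L (fun a2 => rsum L (fun b2 => f a1 b1 a2 b2))))).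
  assert (s4_ext : forall f g, (forall a1 b1 a2 b2, f a1 b1 a2 b2 = g a1 b1 a2 b2) -> s4 f = s4 g).
  { intros f g Hfg. unfold s4. apply rsum_ext; intros; apply rsum_ext; intros; apply rsum_ext; intros; apply rsum_ext; intros; auto. }
  assert (s4_plus : forall f g, s4 (fun a1 b1 a2 b2 => f a1 b1 a2 b2 + g a1 b1 a2 b2) = s4 f + s4 g).
  { intros f g. unfold s4. rewrite <- rsum_plus. apply rsum_ext; intros. rewrite <- rsum_plus. apply rsum_ext; intros.
    rewrite <- rsum_plus. apply rsum_ext; intros. rewrite <- rsum_plus. reflexivity. }
  assert (s4_scal : forall c f, s4 (fun a1 b1 a2 b2 => c * f a1 b1 a2 b2) = c * s4 f).
  { intros c f. unfold s4. rewrite <- rsum_scal_l. apply rsum_ext; intros. rewrite <- rsum_scal_l. apply rsum_ext; intros.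
    rewrite <- rsum_scal_l. apply rsum_ext; intros. rewrite <- rsum_scal_l. reflexivity. }
  assert (Main : s4 (fun a1 b1 a2 b2 => T a1 b1 a2 b2 * PU a1 a2 * PV b1 b2) =
    s4 (fun a1 b1 a2 b2 => (INR (ccop a1 b1 a) * U a1 * V b1) * (INR (ccop a2 b2 b) * U a2 * V b2))
    + MU * s4 (fun a1 b1 a2 b2 => T a1 b1 a2 b2 * D1 a1 a2 * (V b1 * V b2))
    + MV * s4 (fun a1 b1 a2 b2 => T a1 b1 a2 b2 * D2 b1 b2 * (U a1 * U a2))
    + MU * MV * s4 (fun a1 b1 a2 b2 => T a1 b1 a2 b2 * D1 a1 a2 * D2 b1 b2)).
  { rewrite <- !s4_scal, <- !s4_plus. apply s4_ext; intros. rewrite S2. unfold T. ring. }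
  assert (G1 : s4 (fun a1 b1 a2 b2 => (INR (ccop a1 b1 a) * U a1 * V b1) * (INR (ccop a2 b2 b) * U a2 * V b2)) = W a * W b).
  { unfold s4. rewrite (HW a), (HW b) by lia. rewrite (conv_big H n U V a), (conv_big H n U V b) by lia. fold L.
    rewrite <- rsum_scal_r. apply rsum_ext; intros a1 _. rewrite <- rsum_scal_r. apply rsum_ext; intros b1 _.
    rewrite <- rsum_scal_l. apply rsum_ext; intros a2 _. rewrite <- rsum_scal_l. reflexivity. }
  assert (G2 : s4 (fun a1 b1 a2 b2 => T a1 b1 a2 b2 * D1 a1 a2 * (V b1 * V b2)) = 1).
  { unfold s4, L. rewrite (All_delta H n _ a); [|lia|].
    2:{ intros x Hx. apply rsum_zero; intros; apply rsum_zero; intros; apply rsum_zero; intros. unfold D1. dd. }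
    rewrite (All_delta H n _ cone); [|rewrite cone_deg; lia|].
    2:{ intros x Hx. apply rsum_zero; intros; apply rsum_zero; intros. unfold T. rewrite (ccop_R0 H a x a). ring.
        intro X. apply Hx, cdeg_zero. lia. }
    rewrite (All_delta H n _ b); [|lia|].
    2:{ intros x Hx. apply rsum_zero; intros. unfold D1. dd. }
    rewrite (All_delta H n _ cone); [|rewrite cone_deg; lia|].
    2:{ intros x Hx. unfold T. rewrite (ccop_R0 H b x b). ring. intro X. apply Hx, cdeg_zero. lia. }
    unfold T, D1. rewrite !ccop_counit_r. dd. rewrite HV. ring. }
  assert (G3 : s4 (fun a1 b1 a2 b2 => T a1 b1 a2 b2 * D2 b1 b2 * (U a1 * U a2)) = 1).
  { unfold s4, L. rewrite (All_delta H n _ cone); [|rewrite cone_deg; lia|].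
    2:{ intros x Hx. apply rsum_zero; intros y _; apply rsum_zero; intros; apply rsum_zero; intros.
        unfold T, D2. destruct (cB_eq_dec y a) as [->|]; [|dd]. rewrite (ccop_R0 H x a a). ring.
        intro X. apply Hx, cdeg_zero. lia. }
    rewrite (All_delta H n _ a); [|lia|].
    2:{ intros x Hx. apply rsum_zero; intros; apply rsum_zero; intros. unfold D2. dd. }
    rewrite (All_delta H n _ cone); [|rewrite cone_deg; lia|].
    2:{ intros x Hx. apply rsum_zero; intros y _. unfold T, D2. destruct (cB_eq_dec y b) as [->|]; [|dd].
        rewrite (ccop_R0 H x b b). ring. intro X. apply Hx, cdeg_zero. lia. }
    rewrite (All_delta H n _ b); [|lia|].
    2:{ intros x Hx. unfold D2. dd. }
    unfold T, D2. rewrite !ccop_counit_l. dd. rewrite HU. ring. }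
  assert (G4 : s4 (fun a1 b1 a2 b2 => T a1 b1 a2 b2 * D1 a1 a2 * D2 b1 b2) = 0).
  { unfold s4. apply rsum_zero; intros; apply rsum_zero; intros; apply rsum_zero; intros; apply rsum_zero; intros.
    unfold T, D1, D2. dd. rewrite (ccop_R0 H a a a). ring. lia. }
  change (rsum L (fun z => INR (cmul a b z) * U z)) with (PU a b).
  change (rsum L (fun z => INR (cmul a b z) * V z)) with (PV a b). fold MU MV.
  rewrite S1. change (rsum L (fun a1 => rsum L (fun b1 => rsum L (fun a2 => rsum L (fun b2 => T a1 b1 a2 b2 * PU a1 a2 * PV b1 b2)))))
    with (s4 (fun a1 b1 a2 b2 => T a1 b1 a2 b2 * PU a1 a2 * PV b1 b2)).
  rewrite Main, G1, G2, G3, G4. ring.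
Qed.
End HopfM2.

Open Scope R_scope.

Section Sew.
Variable g : R -> R -> R.
Variables (M th : R).
Hypothesis Hth : 1 < th.
Hypothesis HM : 0 <= M.
Hypothesis Hg : forall s u t, Rabs (g s t - g s u - g u t) <= M * powR (Rabs (u - s) + Rabs (t - u)) th.

Definition hk (k : nat) : R := / 2 ^ k.
Definition pt (k : nat) (m : Z) : R := IZR m * hk k.
Definition mk (k : nat) (t : R) : Z := fl (t * 2 ^ k).

Lemma hk_pos k : 0 < hk k.
Proof. unfold hk. apply Rinv_0_lt_compat, pow_lt; lra. Qed.
Lemma hk_S k : hk (S k) = hk k / 2.
Proof. unfold hk. simpl. field. apply pow_nonzero; lra. Qed.

Lemma mk_spec k t : pt k (mk k t) <= t < pt k (mk k t) + hk k.
Proof. unfold pt, mk. destruct (fl_spec (t * 2 ^ k)) as [H1 H2].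
  assert (P : 0 < 2 ^ k) by (apply pow_lt; lra). unfold hk.
  split. apply Rmult_le_reg_r with (2 ^ k); auto. rewrite Rmult_assoc, Rinv_l by lra. lra.
  apply Rmult_lt_reg_r with (2 ^ k); auto. rewrite Rmult_plus_distr_r, Rmult_assoc, Rinv_l by lra. lra. Qed.

Lemma pt_double k m : pt (S k) (2 * m) = pt k m.
Proof. unfold pt. rewrite hk_S, mult_IZR. simpl. field. Qed.
Lemma pt_succ k m : pt k (m + 1) = pt k m + hk k.
Proof. unfold pt. rewrite plus_IZR. simpl. ring. Qed.

Lemma mk_S k t : mk (S k) t = (2 * mk k t)%Z \/ mk (S k) t = (2 * mk k t + 1)%Z.
Proof. destruct (mk_spec k t) as [H1 H2]. set (m := mk k t) in *.
  destruct (Rlt_dec t (pt (S k) (2 * m + 1))) as [Hl|Hl].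
  - left. unfold mk. apply fl_unique. pose proof (hk_pos k).
    unfold pt in *. rewrite hk_S in *. rewrite plus_IZR, mult_IZR in *. simpl in *.
    unfold hk in *. simpl. assert (0 < 2^k) by (apply pow_lt; lra).
    split. apply Rmult_le_reg_r with (/ (2 * 2 ^ k)). apply Rinv_0_lt_compat; lra.
    replace (2 * IZR m * / (2 * 2 ^ k)) with (IZR m * / 2 ^ k) by (field; lra).
    replace (t * (2 * 2 ^ k) * / (2 * 2 ^ k)) with t by (field; lra). lra.
    apply Rmult_lt_reg_r with (/ (2 * 2 ^ k)). apply Rinv_0_lt_compat; lra.
    replace (t * (2 * 2 ^ k) * / (2 * 2 ^ k)) with t by (field; lra).
    replace ((2 * IZR m + 1) * / (2 * 2 ^ k)) with ((2 * IZR m + 1) * (/ 2 ^ k / 2)) by (field; lra). lra.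
  - right. unfold mk. apply fl_unique. pose proof (hk_pos k).
    unfold pt in *. rewrite hk_S in *. rewrite plus_IZR, mult_IZR in *. simpl in *.
    unfold hk in *. simpl. assert (0 < 2^k) by (apply pow_lt; lra).
    split. apply Rmult_le_reg_r with (/ (2 * 2 ^ k)). apply Rinv_0_lt_compat; lra.
    replace ((2 * IZR m + 1) * / (2 * 2 ^ k)) with ((2 * IZR m + 1) * (/ 2 ^ k / 2)) by (field; lra).
    replace (t * (2 * 2 ^ k) * / (2 * 2 ^ k)) with t by (field; lra). lra.
    apply Rmult_lt_reg_r with (/ (2 * 2 ^ k)). apply Rinv_0_lt_compat; lra.
    replace (t * (2 * 2 ^ k) * / (2 * 2 ^ k)) with t by (field; lra).
    replace ((2 * IZR m + 1 + 1) * / (2 * 2 ^ k)) with ((IZR m + 1) * / 2 ^ k) by (field; lra). lra. Qed.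

Definition Zanti (sw_w : Z -> R) (m : Z) : R :=
  if Z_le_dec 0 m then sumn (Z.to_nat m) (fun i => sw_w (Z.of_nat i))
  else - sumn (Z.to_nat (- m)) (fun i => sw_w (- Z.of_nat i - 1)%Z).

Lemma Zanti_step sw_w m : Zanti sw_w (m + 1) = Zanti sw_w m + sw_w m.
Proof. unfold Zanti. destruct (Z_le_dec 0 (m + 1)); destruct (Z_le_dec 0 m); try lia.
  - replace (Z.to_nat (m + 1)) with (S (Z.to_nat m)) by lia. simpl. rewrite Z2Nat.id by lia. ring.
  - assert (m = -1)%Z by lia. subst. simpl. ring.
  - replace (Z.to_nat (- m)) with (S (Z.to_nat (- (m + 1)))) by lia. simpl.
    replace (- Z.of_nat (Z.to_nat (- (m + 1))) - 1)%Z with m by lia. ring. Qed.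

Lemma Zanti_diff sw_w a j : Zanti sw_w (a + Z.of_nat j) - Zanti sw_w a = sumn j (fun i => sw_w (a + Z.of_nat i)%Z).
Proof. induction j. simpl. rewrite Z.add_0_r. ring.
  rewrite Nat2Z.inj_succ. unfold Z.succ. rewrite Z.add_assoc, Zanti_step. simpl. rewrite <- IHj. ring. Qed.

Definition sw_w (k : nat) (m : Z) : R := g (pt k m) (pt k (m + 1)).
Definition sw_D (k : nat) : Z -> R := Zanti (sw_w k).
Definition sw_F (k : nat) (t : R) : R := sw_D k (mk k t) + g (pt k (mk k t)) t.
Definition sw_Q (k : nat) (m : Z) : R := sw_D (S k) (2 * m) - sw_D k m.
Definition sw_e (k : nat) (m : Z) : R :=
  g (pt k m) (pt (S k) (2 * m + 1)) + g (pt (S k) (2 * m + 1)) (pt k (m + 1)) - g (pt k m) (pt k (m + 1)).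

Lemma Q_step k m : sw_Q k (m + 1) = sw_Q k m + sw_e k m.
Proof. unfold sw_Q, sw_e, sw_D. replace (2 * (m + 1))%Z with ((2 * m + 1) + 1)%Z by lia.
  rewrite !Zanti_step. unfold sw_w. replace (2 * m + 1 + 1)%Z with (2 * (m + 1))%Z by lia.
  rewrite !pt_double. ring. Qed.

Lemma Q0 k : sw_Q k 0 = 0.
Proof. unfold sw_Q, sw_D, Zanti. simpl. ring. Qed.

Definition sw_q : R := powR (/ 2) th.
Definition sw_r : R := 2 * sw_q.

Lemma q_spec : 0 < sw_q /\ sw_r < 1.
Proof. unfold sw_r, sw_q. rewrite powR_nz by lra. split. apply Rpower_pos.
  assert (E : Rpower (/ 2) th * Rpower 2 th = 1).
  { rewrite Rpower_mult_distr by lra. replace (/2 * 2) with 1 by field. unfold Rpower. rewrite ln_1, Rmult_0_r. apply exp_0. }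
  assert (Rpower 2 1 < Rpower 2 th) by (apply Rpower_lt; lra). rewrite Rpower_1 in H by lra.
  pose proof (Rpower_pos (/2) th). nra. Qed.

Lemma pw_hk k : powR (hk k) th = sw_q ^ k.
Proof. unfold hk, sw_q. rewrite <- pow_inv. apply powR_pow; lra. Qed.

Lemma th_pos : 0 < th. Proof. lra. Qed.

Lemma dg a c t : a <= c <= t -> Rabs (g a t - g a c - g c t) <= M * powR (t - a) th.
Proof. intros H. specialize (Hg a c t). rewrite (Rabs_right (c - a)), (Rabs_right (t - c)) in Hg by lra.
  replace (c - a + (t - c)) with (t - a) in Hg by ring. auto. Qed.

Lemma pw2_ge1 : 1 <= powR 2 th.
Proof. rewrite powR_nz by lra. assert (Rpower 2 0 < Rpower 2 th) by (apply Rpower_lt; lra).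
  unfold Rpower at 1 in H. rewrite Rmult_0_l, exp_0 in H. lra. Qed.

Lemma e_bound k m : Rabs (sw_e k m) <= M * sw_q ^ k.
Proof. unfold sw_e. set (a := pt k m). assert (Ec : pt (S k) (2 * m + 1) = a + hk k / 2).
  { unfold a; rewrite pt_succ, pt_double, hk_S; ring. }
  rewrite Ec, pt_succ. fold a. pose proof (hk_pos k).
  replace (g a (a + hk k / 2) + g (a + hk k / 2) (a + hk k) - g a (a + hk k)) with
    (- (g a (a + hk k) - g a (a + hk k / 2) - g (a + hk k / 2) (a + hk k))) by ring.
  rewrite Rabs_Ropp. eapply Rle_trans; [apply dg; lra|]. rewrite <- pw_hk.
  replace (a + hk k - a) with (hk k) by ring. lra. Qed.

Lemma Q_diff k a j : sw_Q k (a + Z.of_nat j) - sw_Q k a = sumn j (fun i => sw_e k (a + Z.of_nat i)%Z).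
Proof. induction j. simpl. rewrite Z.add_0_r. ring.
  rewrite Nat2Z.inj_succ. unfold Z.succ. rewrite Z.add_assoc, Q_step. simpl. rewrite <- IHj. ring. Qed.

Lemma Q_diff_bound k m1 m2 : (m1 <= m2)%Z -> Rabs (sw_Q k m2 - sw_Q k m1) <= IZR (m2 - m1) * (M * sw_q ^ k).
Proof. intros Hm. replace m2 with (m1 + Z.of_nat (Z.to_nat (m2 - m1)))%Z at 1 by lia.
  rewrite Q_diff. replace (IZR (m2 - m1)) with (INR (Z.to_nat (m2 - m1))).
  apply sumn_abs. intros; apply e_bound. rewrite INR_IZR_INZ. f_equal. lia. Qed.

Lemma Q_bound k m : Rabs (sw_Q k m) <= Rabs (IZR m) * (M * sw_q ^ k).
Proof. destruct (Z_le_dec 0 m).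
  - replace (sw_Q k m) with (sw_Q k m - sw_Q k 0) by (rewrite Q0; ring). rewrite (Rabs_right (IZR m)) by (apply Rle_ge, IZR_le; lia).
    replace (IZR m) with (IZR (m - 0)) by (f_equal; lia). apply Q_diff_bound; auto.
  - replace (sw_Q k m) with (- (sw_Q k 0 - sw_Q k m)) by (rewrite Q0; ring). rewrite Rabs_Ropp.
    rewrite (Rabs_left (IZR m)) by (apply IZR_lt; lia). replace (- IZR m) with (IZR (0 - m)) by (rewrite minus_IZR; simpl; ring).
    apply Q_diff_bound; lia. Qed.

Lemma d_decomp k t : exists rho, sw_F (S k) t - sw_F k t = sw_Q k (mk k t) + rho /\ Rabs rho <= M * sw_q ^ k.
Proof. destruct (mk_spec k t) as [H1 H2]. destruct (mk_spec (S k) t) as [H3 H4].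
  unfold sw_F. destruct (mk_S k t) as [E|E]; rewrite E in *; set (m := mk k t) in *.
  - exists 0. split. rewrite pt_double. unfold sw_Q. ring. rewrite Rabs_R0.
    apply Rmult_le_pos; auto. apply pow_le. pose proof q_spec; lra.
  - set (a := pt k m). set (c := pt (S k) (2 * m + 1)).
    exists (g a c + g c t - g a t). split.
    + unfold sw_D at 1. rewrite Zanti_step. fold (sw_D (S k)). unfold sw_w. rewrite pt_double.
      replace (2 * m + 1)%Z with (2 * m + 1)%Z by reflexivity. fold a c. unfold sw_Q. fold (sw_D (S k)). ring.
    + replace (g a c + g c t - g a t) with (- (g a t - g a c - g c t)) by ring. rewrite Rabs_Ropp.
      assert (Ec : c = a + hk k / 2) by (unfold c, a; rewrite pt_succ, pt_double, hk_S; ring).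
      pose proof (hk_pos k). fold a in H1, H2. fold c in H3. eapply Rle_trans; [apply dg; lra|]. rewrite <- pw_hk.
      apply Rmult_le_compat_l; auto. apply powR_mono; lra. Qed.

Lemma mk_diff k s t : s <= t -> (mk k s <= mk k t)%Z /\ IZR (mk k t - mk k s) < (t - s) * 2 ^ k + 1.
Proof. intros Hst. destruct (mk_spec k s) as [H1 H2]. destruct (mk_spec k t) as [H3 H4].
  unfold pt in *. unfold hk in *. assert (P : 0 < 2 ^ k) by (apply pow_lt; lra).
  assert (A1 : IZR (mk k s) < IZR (mk k t) + 1).
  { apply Rmult_lt_reg_r with (/ 2 ^ k). apply Rinv_0_lt_compat; auto. lra. }
  assert (A2 : IZR (mk k t) - IZR (mk k s) < (t - s) * 2 ^ k + 1).
  { apply Rmult_lt_reg_r with (/ 2 ^ k). apply Rinv_0_lt_compat; auto.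
    replace (((t - s) * 2 ^ k + 1) * / 2 ^ k) with (t - s + / 2 ^ k) by (field; lra). lra. }
  split. rewrite <- plus_IZR in A1. apply lt_IZR in A1. lia. rewrite minus_IZR; auto. Qed.

Lemma qk_le_rk k : sw_q ^ k <= sw_r ^ k.
Proof. pose proof q_spec. apply pow_incr. unfold sw_r; lra. Qed.
Lemma rk_eq k : 2 ^ k * sw_q ^ k = sw_r ^ k.
Proof. unfold sw_r. rewrite Rpow_mult_distr. ring. Qed.

Lemma d_bound k t : Rabs (sw_F (S k) t - sw_F k t) <= M * (Rabs t + 2) * sw_r ^ k.
Proof. destruct (d_decomp k t) as [rho [E Hr]]. rewrite E.
  eapply Rle_trans; [apply Rabs_triang|]. pose proof (Q_bound k (mk k t)).
  destruct (mk_spec k t) as [H1 H2]. unfold pt, hk in H1, H2. assert (P : 0 < 2 ^ k) by (apply pow_lt; lra).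
  assert (Hm : Rabs (IZR (mk k t)) <= Rabs t * 2 ^ k + 1).
  { assert (IZR (mk k t) <= t * 2 ^ k). { apply Rmult_le_reg_r with (/ 2 ^ k). apply Rinv_0_lt_compat; auto.
      replace (t * 2 ^ k * / 2 ^ k) with t by (field; lra). lra. }
    assert (t * 2 ^ k < IZR (mk k t) + 1). { apply Rmult_lt_reg_r with (/ 2 ^ k). apply Rinv_0_lt_compat; auto.
      replace (t * 2 ^ k * / 2 ^ k) with t by (field; lra). lra. }
    assert (Rabs (t * 2^k) = Rabs t * 2 ^ k) by (rewrite Rabs_mult, (Rabs_right (2^k)); lra).
    unfold Rabs in *. repeat destruct Rcase_abs; lra. }
  assert (Hq := qk_le_rk k). assert (Hqp : 0 <= sw_q ^ k) by (apply pow_le; pose proof q_spec; lra).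
  rewrite <- (rk_eq k).
  assert (Rabs (IZR (mk k t)) * (M * sw_q ^ k) <= (Rabs t * 2 ^ k + 1) * (M * sw_q ^ k)).
  { apply Rmult_le_compat_r; auto. apply Rmult_le_pos; auto. }
  assert (M * sw_q ^ k <= M * sw_r ^ k) by (apply Rmult_le_compat_l; auto). rewrite <- rk_eq in H3.
  pose proof (Rabs_pos t). nra. Qed.

Lemma F_cauchy t : Cauchy_crit (fun k => sw_F k t).
Proof. apply (geom_cauchy _ (M * (Rabs t + 2)) sw_r). pose proof (Rabs_pos t); apply Rmult_le_pos; lra.
  pose proof q_spec as [Hq Hr]; split; [unfold sw_r; lra|lra]. intros; apply d_bound. Qed.

Definition sw_f (t : R) : R := proj1_sig (R_complete (fun k => sw_F k t) (F_cauchy t)).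
Lemma f_cv t : Un_cv (fun k => sw_F k t) (sw_f t).
Proof. unfold sw_f. destruct (R_complete _ _); auto. Qed.

Lemma dd_bound k s t : s <= t ->
  Rabs ((sw_F (S k) t - sw_F k t) - (sw_F (S k) s - sw_F k s)) <= M * sw_q ^ k * ((t - s) * 2 ^ k + 3).
Proof. intros Hst. destruct (d_decomp k t) as [r1 [E1 H1]]. destruct (d_decomp k s) as [r2 [E2 H2]].
  rewrite E1, E2. destruct (mk_diff k s t Hst) as [Hle Hd].
  replace (sw_Q k (mk k t) + r1 - (sw_Q k (mk k s) + r2)) with ((sw_Q k (mk k t) - sw_Q k (mk k s)) + (r1 - r2)) by ring.
  eapply Rle_trans; [apply Rabs_triang|]. pose proof (Q_diff_bound k _ _ Hle).
  assert (Rabs (r1 - r2) <= 2 * (M * sw_q ^ k)). { unfold Rminus; eapply Rle_trans; [apply Rabs_triang|]. rewrite Rabs_Ropp; lra. }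
  assert (Hqp : 0 <= M * sw_q ^ k) by (apply Rmult_le_pos; auto; apply pow_le; pose proof q_spec; lra).
  assert (IZR (mk k t - mk k s) * (M * sw_q ^ k) <= ((t - s) * 2 ^ k + 1) * (M * sw_q ^ k)) by (apply Rmult_le_compat_r; lra).
  nra. Qed.

Lemma local_bound k s t : s < t -> t - s <= hk k -> hk (S k) < t - s ->
  Rabs (sw_f t - sw_f s - g s t) <= powR 2 th * (2 * M * powR 2 th + 4 * M / (1 - sw_r)) * powR (t - s) th.
Proof. intros Hst H1 H2. pose proof q_spec as [Hq Hr]. pose proof (hk_pos k).
  assert (Hcv : Un_cv (fun K => sw_F K t - sw_F K s) (sw_f t - sw_f s)) by (apply CV_minus; apply f_cv).
  set (u := fun K => sw_F K t - sw_F K s).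
  assert (Hqk : sw_q ^ k <= powR 2 th * powR (t - s) th).
  { rewrite <- pw_hk, <- powR_mult by lra. apply powR_mono; [|lra]. rewrite hk_S in H2. pose proof (hk_pos k). lra. }
  assert (Hqkp : 0 <= sw_q ^ k) by (apply pow_le; lra).
  assert (U0 : Rabs (u k - g s t) <= 2 * M * powR 2 th * sw_q ^ k).
  { unfold u, sw_F. destruct (mk_diff k s t ltac:(lra)) as [Hle Hd].
    destruct (mk_spec k s) as [S1 S2]. destruct (mk_spec k t) as [T1 T2].
    assert (Hd2 : (t - s) * 2 ^ k <= 1).
    { unfold hk in H1. assert (P : 0 < 2 ^ k) by (apply pow_lt; lra).
      apply Rmult_le_reg_r with (/ 2 ^ k). apply Rinv_0_lt_compat; auto. replace ((t - s) * 2 ^ k * / 2 ^ k) with (t - s) by (field; lra). lra. }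
    assert (Hc : mk k t = mk k s \/ mk k t = (mk k s + 1)%Z).
    { assert (IZR (mk k t - mk k s) < 2) by lra. apply lt_IZR in H0. lia. }
    set (a := pt k (mk k s)) in *.
    destruct Hc as [Hc|Hc]; rewrite Hc in *; fold a in T1, T2 |- *.
    - replace (sw_D k (mk k s) + g a t - (sw_D k (mk k s) + g a s) - g s t) with (g a t - g a s - g s t) by ring.
      eapply Rle_trans; [apply dg; lra|]. rewrite <- pw_hk.
      assert (powR (t - a) th <= powR (hk k) th) by (apply powR_mono; lra).
      pose proof pw2_ge1. pose proof (powR_nonneg (hk k) th).
      assert (M * powR (t - a) th <= M * powR (hk k) th) by (apply Rmult_le_compat_l; auto).
      assert (0 <= M * powR (hk k) th) by (apply Rmult_le_pos; auto).
      assert (M * powR (hk k) th * 1 <= M * powR (hk k) th * (2 * powR 2 th)) by (apply Rmult_le_compat_l; lra).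
      nra.
    - rewrite pt_succ in T1, T2 |- *. fold a in T1, T2 |- *. unfold sw_D at 1. rewrite Zanti_step. fold (sw_D k).
      unfold sw_w. rewrite pt_succ. fold a.
      replace (sw_D k (mk k s) + g a (a + hk k) + g (a + hk k) t - (sw_D k (mk k s) + g a s) - g s t)
        with (- (g a t - g a (a + hk k) - g (a + hk k) t) + (g a t - g a s - g s t)) by ring.
      eapply Rle_trans; [apply Rabs_triang|]. rewrite Rabs_Ropp.
      assert (powR (t - a) th <= powR 2 th * sw_q ^ k).
      { rewrite <- pw_hk, <- powR_mult by lra. apply powR_mono; lra. }
      pose proof (dg a (a + hk k) t ltac:(lra)). pose proof (dg a s t ltac:(lra)). nra. }
  assert (Ustep : forall j, Rabs (u (S (k + j)) - u (k + j)%nat) <= 4 * M * sw_q ^ k * sw_r ^ j).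
  { intros j. unfold u. replace (sw_F (S (k + j)) t - sw_F (S (k + j)) s - (sw_F (k + j)%nat t - sw_F (k + j)%nat s))
      with ((sw_F (S (k + j)) t - sw_F (k + j)%nat t) - (sw_F (S (k + j)) s - sw_F (k + j)%nat s)) by ring.
    eapply Rle_trans; [apply dd_bound; lra|].
    assert (E1 : (t - s) * 2 ^ (k + j) <= 2 ^ j).
    { rewrite pow_add. unfold hk in H1. assert (P : 0 < 2 ^ k) by (apply pow_lt; lra).
      assert ((t - s) * 2 ^ k <= 1). { apply Rmult_le_reg_r with (/ 2 ^ k). apply Rinv_0_lt_compat; auto.
        replace ((t - s) * 2 ^ k * / 2 ^ k) with (t - s) by (field; lra). lra. }
      assert (0 < 2 ^ j) by (apply pow_lt; lra). nra. }
    rewrite pow_add. assert (Hqj : sw_q ^ j <= sw_r ^ j) by apply qk_le_rk. rewrite <- rk_eq.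
    assert (0 <= sw_q ^ j) by (apply pow_le; lra). assert (0 < 2 ^ j) by (apply pow_lt; lra).
    assert (0 <= M * (sw_q ^ k * sw_q ^ j)) by (apply Rmult_le_pos; auto; apply Rmult_le_pos; auto).
    assert (sw_q ^ j * 2 ^ j >= sw_q ^ j). { assert (1 <= 2 ^ j) by (apply pow_R1_Rle; lra). nra. }
    assert (M * (sw_q ^ k * sw_q ^ j) * ((t - s) * 2 ^ (k + j) + 3) <= M * (sw_q ^ k * sw_q ^ j) * (2 ^ j + 3)) by (apply Rmult_le_compat_l; lra).
    assert (0 <= M * sw_q ^ k) by (apply Rmult_le_pos; auto). nra. }
  assert (Ubd : forall K, (K >= k)%nat -> Rabs (u K - g s t) <= sw_q ^ k * (2 * M * powR 2 th + 4 * M / (1 - sw_r))).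
  { intros K HK. pose proof (geom_tail (fun j => u (k + j)%nat) (4 * M * sw_q ^ k) sw_r ltac:(apply Rmult_le_pos; lra) ltac:(unfold sw_r in *; lra)
      ltac:(intros j; cbv beta; rewrite Nat.add_succ_r; apply Ustep) 0 (K - k)). simpl in H0. rewrite Nat.add_0_r in H0.
    replace (k + (K - k))%nat with K in H0 by lia.
    replace (u K - g s t) with ((u K - u k) + (u k - g s t)) by ring. eapply Rle_trans; [apply Rabs_triang|].
    assert (E : sw_q ^ k * (2 * M * powR 2 th + 4 * M / (1 - sw_r)) = 2 * M * powR 2 th * sw_q ^ k + 4 * M * sw_q ^ k * 1 / (1 - sw_r)) by (field; lra).
    rewrite E. lra. }
  pose proof (cv_abs_le_c u (sw_f t - sw_f s) (g s t) k _ Hcv Ubd).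
  eapply Rle_trans; [apply H0|]. assert (0 <= 2 * M * powR 2 th + 4 * M / (1 - sw_r)).
  { pose proof pw2_ge1. assert (0 <= 4 * M / (1 - sw_r)) by (unfold Rdiv; apply Rmult_le_pos; [lra|left; apply Rinv_0_lt_compat; lra]). nra. }
  replace (powR 2 th * (2 * M * powR 2 th + 4 * M / (1 - sw_r)) * powR (t - s) th) with
    ((powR 2 th * powR (t - s) th) * (2 * M * powR 2 th + 4 * M / (1 - sw_r))) by ring.
  apply Rmult_le_compat_r; auto. Qed.

End Sew.

Open Scope R_scope.

Lemma find_k x : 0 < x <= 1 -> exists k, hk (S k) < x <= hk k.
Proof. intros Hx.
  destruct (pow_lt_1_zero (/2) ltac:(rewrite Rabs_right; lra) x ltac:(lra)) as [N HN].
  specialize (HN N (le_n _)). rewrite Rabs_right in HN by (apply Rle_ge, pow_le; lra).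
  assert (G : forall n, hk n < x -> exists k, hk (S k) < x <= hk k).
  { induction n; intros Hn. unfold hk in Hn; simpl in Hn; lra.
    destruct (Rlt_dec (hk n) x) as [Hl|Hl]; auto. exists n; lra. }
  apply (G N). unfold hk. rewrite <- pow_inv. auto. Qed.

Lemma exists_pow2 x : exists j, x <= 2 ^ j.
Proof. destruct (archimed x) as [H1 _]. exists (Z.to_nat (up x)).
  destruct (Z_le_dec 0 (up x)).
  - assert (INR (Z.to_nat (up x)) = IZR (up x)) by (rewrite INR_IZR_INZ; f_equal; lia).
    assert (INR (Z.to_nat (up x)) <= 2 ^ Z.to_nat (up x)).
    { clear. induction (Z.to_nat (up x)). simpl; lra. rewrite S_INR. simpl.
      assert (1 <= 2 ^ n) by (apply pow_R1_Rle; lra). lra. }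
    lra.
  - assert (IZR (up x) < 0) by (apply IZR_lt; lia). assert (0 < 2 ^ Z.to_nat (up x)) by (apply pow_lt; lra). lra. Qed.

Definition cocycle (C : R -> R -> R -> R) : Prop :=
  forall s u v t, C s v t + C s u v = C s u t + C u v t.

Theorem sewing (C : R -> R -> R -> R) (M th : R) : 1 < th -> 0 <= M -> cocycle C ->
  (forall s u t, Rabs (C s u t) <= M * powR (Rabs (u - s) + Rabs (t - u)) th) ->
  exists Phi : R -> R -> R, (forall s u t, Phi s t = Phi s u + Phi u t + C s u t) /\
    exists K, 0 <= K /\ forall s t, Rabs (Phi s t) <= K * powR (Rabs (t - s)) th.
Proof.
  intros Hth HM Hc HC.
  assert (Css : forall s t, C s s t = 0).
  { intros s t. assert (C s s t = C s s s) by (pose proof (Hc s s t s); lra).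
    rewrite H. specialize (HC s s s). rewrite Rminus_diag, Rabs_R0, Rplus_0_r, powR_0 in HC by lra.
    rewrite Rmult_0_r in HC. pose proof (Rabs_pos (C s s s)). apply Rabs_eq_0. lra. }
  set (k := fun s t => C s 0 t - C s 0 s).
  assert (Hk : forall s u t, k s t - k s u - k u t = C s u t).
  { intros s u t. unfold k. pose proof (Hc s 0 u t). pose proof (Hc u 0 u t). rewrite Css in H0. lra. }
  set (g := fun s t => - k s t).
  assert (Hg : forall s u t, Rabs (g s t - g s u - g u t) <= M * powR (Rabs (u - s) + Rabs (t - u)) th).
  { intros. unfold g. replace (- k s t - - k s u - - k u t) with (- (k s t - k s u - k u t)) by ring.
    rewrite Hk, Rabs_Ropp. auto. }
  set (ff := sw_f g M th Hth HM Hg).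
  exists (fun s t => ff t - ff s + k s t). split.
  { intros s u t. rewrite <- (Hk s u t). ring. }
  pose proof (q_spec th Hth) as [Hq Hr].
  set (Kl := powR 2 th * (2 * M * powR 2 th + 4 * M / (1 - sw_r th))).
  assert (Kl0 : 0 <= Kl).
  { unfold Kl. assert (0 <= powR 2 th) by apply powR_nonneg.
    assert (0 <= 4 * M / (1 - sw_r th)) by (unfold Rdiv; apply Rmult_le_pos; [lra|left; apply Rinv_0_lt_compat; lra]).
    assert (0 <= 2 * M * powR 2 th) by (apply Rmult_le_pos; lra). apply Rmult_le_pos; lra. }
  assert (P2 : 0 <= powR 2 th) by apply powR_nonneg.
  assert (Loc : forall s t, s < t -> t - s <= 1 -> Rabs (ff t - ff s + k s t) <= Kl * powR (t - s) th).
  { intros s t Hst H1. destruct (find_k (t - s)) as [j [Hj1 Hj2]]; [lra|].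
    pose proof (local_bound g M th Hth HM Hg j s t Hst Hj2 Hj1). fold ff in H. unfold g in H.
    replace (ff t - ff s - - k s t) with (ff t - ff s + k s t) in H by ring. auto. }
  set (K0 := Kl + M * powR 2 th).
  assert (K00 : 0 <= K0) by (unfold K0; assert (0 <= M * powR 2 th) by (apply Rmult_le_pos; lra); lra).
  assert (Kss : forall s, k s s = 0) by (intros; unfold k; ring).
  assert (Loc2 : forall s t, Rabs (t - s) <= 1 -> Rabs (ff t - ff s + k s t) <= K0 * powR (Rabs (t - s)) th).
  { intros s t Hts. destruct (Rtotal_order s t) as [Hst|[Hst|Hst]].
    - rewrite (Rabs_right (t - s)) in * by lra. eapply Rle_trans; [apply Loc; lra|]. apply Rmult_le_compat_r.
      apply powR_nonneg. unfold K0. assert (0 <= M * powR 2 th) by (apply Rmult_le_pos; lra); lra.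
    - subst. rewrite Kss, Rminus_diag, Rplus_0_r, Rabs_R0. apply Rmult_le_pos; auto. apply powR_nonneg.
    - assert (E : ff t - ff s + k s t = - (ff s - ff t + k t s) - C s t s).
      { pose proof (Hk s t s). rewrite Kss in H. lra. }
      rewrite E. rewrite (Rabs_left (t - s)) in Hts by lra. rewrite (Rabs_left (t - s)) by lra.
      pose proof (Loc t s Hst ltac:(lra)). pose proof (HC s t s).
      rewrite (Rabs_left (t - s)), (Rabs_right (s - t)) in H0 by lra.
      replace (- (t - s) + (s - t)) with (2 * (s - t)) in H0 by ring.
      rewrite powR_mult in H0 by lra. replace (- (t - s)) with (s - t) by ring.
      unfold Rminus at 1. eapply Rle_trans; [apply Rabs_triang|]. rewrite !Rabs_Ropp. unfold K0.
      assert (0 <= powR (s - t) th) by apply powR_nonneg. nra. }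
  set (Ks := Rmax K0 (M / (1 - sw_r th))).
  assert (Ks1 : K0 <= Ks) by apply Rmax_l.
  assert (Ks2 : M / (1 - sw_r th) <= Ks) by apply Rmax_r.
  assert (Ks3 : sw_r th * Ks + M <= Ks).
  { assert (M <= (1 - sw_r th) * Ks). { apply Rmult_le_reg_r with (/ (1 - sw_r th)). apply Rinv_0_lt_compat; lra.
      replace ((1 - sw_r th) * Ks * / (1 - sw_r th)) with Ks by (field; lra). auto. } lra. }
  assert (Glob : forall j s t, Rabs (t - s) <= 2 ^ j -> Rabs (ff t - ff s + k s t) <= Ks * powR (Rabs (t - s)) th).
  { induction j; intros s t Hj.
    - simpl in Hj. eapply Rle_trans; [apply Loc2; auto|]. apply Rmult_le_compat_r; auto. apply powR_nonneg.
    - set (m := (s + t) / 2).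
      replace (ff t - ff s + k s t) with ((ff m - ff s + k s m) + (ff t - ff m + k m t) + C s m t)
        by (rewrite <- (Hk s m t); ring).
      assert (Em1 : Rabs (m - s) = Rabs (t - s) / 2) by (unfold m; rewrite <- (Rabs_right 2) at 2 by lra;
        unfold Rdiv; rewrite <- Rabs_Rinv by lra; rewrite <- Rabs_mult; f_equal; field).
      assert (Em2 : Rabs (t - m) = Rabs (t - s) / 2) by (unfold m; rewrite <- (Rabs_right 2) at 2 by lra;
        unfold Rdiv; rewrite <- Rabs_Rinv by lra; rewrite <- Rabs_mult; f_equal; field).
      simpl in Hj.
      pose proof (IHj s m ltac:(rewrite Em1; lra)). pose proof (IHj m t ltac:(rewrite Em2; lra)).
      pose proof (HC s m t). rewrite Em1, Em2 in *. replace (Rabs (t - s) / 2 + Rabs (t - s) / 2) with (Rabs (t - s)) in H1 by field.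
      assert (Ph : powR (Rabs (t - s) / 2) th = sw_q th * powR (Rabs (t - s)) th).
      { unfold Rdiv. rewrite Rmult_comm, powR_mult; [reflexivity|lra|apply Rabs_pos|lra]. }
      rewrite Ph in H, H0. eapply Rle_trans; [apply Rabs_triang|].
      assert (0 <= powR (Rabs (t - s)) th) by apply powR_nonneg.
      assert (Rabs (ff m - ff s + k s m + (ff t - ff m + k m t)) <= 2 * (Ks * (sw_q th * powR (Rabs (t - s)) th))).
      { eapply Rle_trans; [apply Rabs_triang|]. lra. }
      unfold sw_r in Ks3. nra. }
  exists Ks. split. pose proof (Rmax_l K0 (M / (1 - sw_r th))). fold Ks in H. lra.
  intros s t. destruct (exists_pow2 (Rabs (t - s))) as [j Hj]. apply (Glob j); auto.
Qed.

Lemma additive_zero (Dl : R -> R -> R) (K th : R) : 1 < th -> 0 <= K ->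
  (forall s u t, Dl s t = Dl s u + Dl u t) ->
  (forall s t, Rabs (Dl s t) <= K * powR (Rabs (t - s)) th) -> forall s t, Dl s t = 0.
Proof. intros Hth HK Hadd Hb.
  pose proof (q_spec th Hth) as [Hq Hr].
  assert (G : forall j s t, Rabs (Dl s t) <= K * powR (Rabs (t - s)) th * sw_r th ^ j).
  { induction j; intros s t. simpl; rewrite Rmult_1_r; auto.
    set (m := (s + t) / 2). rewrite (Hadd s m t).
    assert (Em1 : Rabs (m - s) = Rabs (t - s) / 2) by (unfold m; rewrite <- (Rabs_right 2) at 2 by lra;
        unfold Rdiv; rewrite <- Rabs_Rinv by lra; rewrite <- Rabs_mult; f_equal; field).
    assert (Em2 : Rabs (t - m) = Rabs (t - s) / 2) by (unfold m; rewrite <- (Rabs_right 2) at 2 by lra;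
        unfold Rdiv; rewrite <- Rabs_Rinv by lra; rewrite <- Rabs_mult; f_equal; field).
    pose proof (IHj s m). pose proof (IHj m t). rewrite Em1 in H. rewrite Em2 in H0.
    assert (Ph : powR (Rabs (t - s) / 2) th = sw_q th * powR (Rabs (t - s)) th).
    { unfold Rdiv. rewrite Rmult_comm, powR_mult; [reflexivity|lra|apply Rabs_pos|lra]. }
    rewrite Ph in H, H0. eapply Rle_trans; [apply Rabs_triang|]. simpl. unfold sw_r at 1. lra. }
  intros s t. apply Rabs_eq_0. destruct (Rle_lt_dec (Rabs (Dl s t)) 0) as [|Hpos]. pose proof (Rabs_pos (Dl s t)); lra.
  exfalso. set (A := K * powR (Rabs (t - s)) th + 1).
  assert (HA : 0 < A) by (unfold A; assert (0 <= K * powR (Rabs (t - s)) th) by (apply Rmult_le_pos; auto; apply powR_nonneg); lra).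
  destruct (pow_lt_1_zero (sw_r th) ltac:(rewrite Rabs_right; unfold sw_r in *; lra) (Rabs (Dl s t) / A) ltac:(apply Rdiv_lt_0_compat; lra)) as [N HN].
  specialize (HN N (le_n _)). specialize (G N s t). rewrite Rabs_right in HN by (apply Rle_ge, pow_le; unfold sw_r in *; lra).
  assert (A * sw_r th ^ N < Rabs (Dl s t)). { apply Rmult_lt_compat_l with (r := A) in HN; auto.
    replace (A * (Rabs (Dl s t) / A)) with (Rabs (Dl s t)) in HN by (field; lra). auto. }
  assert (0 <= sw_r th ^ N) by (apply pow_le; unfold sw_r in *; lra). unfold A in H. nra.
Qed.

Lemma bootstrap (Phi : R -> R -> R) (th K A : R) : 1 < th -> 0 <= K -> 0 <= A ->
  (forall s t, Rabs (Phi s t) <= K * powR (Rabs (t - s)) th) ->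
  (forall s t, Rabs (Phi s t) <= Rabs (Phi s ((s + t) / 2)) + Rabs (Phi ((s + t) / 2) t) + A * powR (Rabs (t - s)) th) ->
  forall s t, Rabs (Phi s t) <= A / (1 - sw_r th) * powR (Rabs (t - s)) th.
Proof. intros Hth HK HA Hb Hm. pose proof (q_spec th Hth) as [Hq Hr].
  set (r := sw_r th) in *. set (L := A / (1 - r)).
  assert (HL : 0 <= L) by (unfold L, Rdiv; apply Rmult_le_pos; [lra|left; apply Rinv_0_lt_compat; lra]).
  assert (HLr : r * L + A = L) by (unfold L; field; lra).
  assert (G : forall j s t, Rabs (Phi s t) <= (L + r ^ j * (K + L)) * powR (Rabs (t - s)) th).
  { induction j; intros s t. simpl. eapply Rle_trans; [apply Hb|]. apply Rmult_le_compat_r. apply powR_nonneg. lra.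
    eapply Rle_trans; [apply Hm|]. set (m := (s + t) / 2).
    assert (Em1 : Rabs (m - s) = Rabs (t - s) / 2) by (unfold m; rewrite <- (Rabs_right 2) at 2 by lra;
        unfold Rdiv; rewrite <- Rabs_Rinv by lra; rewrite <- Rabs_mult; f_equal; field).
    assert (Em2 : Rabs (t - m) = Rabs (t - s) / 2) by (unfold m; rewrite <- (Rabs_right 2) at 2 by lra;
        unfold Rdiv; rewrite <- Rabs_Rinv by lra; rewrite <- Rabs_mult; f_equal; field).
    pose proof (IHj s m). pose proof (IHj m t). rewrite Em1 in H. rewrite Em2 in H0.
    assert (Ph : powR (Rabs (t - s) / 2) th = sw_q th * powR (Rabs (t - s)) th).
    { unfold Rdiv. rewrite Rmult_comm, powR_mult; [reflexivity|lra|apply Rabs_pos|lra]. }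
    rewrite Ph in H, H0. assert (0 <= powR (Rabs (t - s)) th) by apply powR_nonneg.
    assert (E : (L + r ^ S j * (K + L)) * powR (Rabs (t - s)) th =
       2 * ((L + r ^ j * (K + L)) * (sw_q th * powR (Rabs (t - s)) th)) + A * powR (Rabs (t - s)) th).
    { simpl. rewrite <- HLr at 1. unfold r, sw_r. ring. }
    rewrite E. lra. }
  intros s t. set (P := powR (Rabs (t - s)) th). assert (HP : 0 <= P) by apply powR_nonneg.
  destruct (Rle_dec (Rabs (Phi s t)) (L * P)) as [|Hn]; auto. exfalso.
  set (eps := Rabs (Phi s t) - L * P). assert (He : 0 < eps) by (unfold eps; lra).
  destruct (pow_lt_1_zero r ltac:(rewrite Rabs_right; unfold r, sw_r in *; lra) (eps / ((K + L) * P + 1)) ltac:(apply Rdiv_lt_0_compat; [lra|]; assert (0 <= (K+L)*P) by (apply Rmult_le_pos; lra); lra)) as [N HN].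
  specialize (HN N (le_n _)). rewrite Rabs_right in HN by (apply Rle_ge, pow_le; unfold r, sw_r in *; lra).
  specialize (G N s t). fold P in G.
  assert (X1 : r ^ N * ((K + L) * P + 1) < eps).
  { apply Rmult_lt_compat_r with (r := (K + L) * P + 1) in HN. replace (eps / ((K + L) * P + 1) * ((K + L) * P + 1)) with eps in HN by (field; assert (0 <= (K+L)*P) by (apply Rmult_le_pos; lra); lra). auto.
    assert (0 <= (K+L)*P) by (apply Rmult_le_pos; lra); lra. }
  assert (0 <= r ^ N) by (apply pow_le; unfold r, sw_r in *; lra). unfold eps in X1. nra.
Qed.

Open Scope R_scope.

Definition Sew (th : R) (C : R -> R -> R -> R) : R -> R -> R :=
  epsilon (inhabits (fun _ _ : R => 0)) (fun Phi => (forall s u t, Phi s t = Phi s u + Phi u t + C s u t) /\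
    exists K, 0 <= K /\ forall s t, Rabs (Phi s t) <= K * powR (Rabs (t - s)) th).

Section Main.
Variable H : CHA.
Notation B := (cB H).
Variables (gamma : R) (N : nat).
Hypothesis Hnd : nondegenerate H.
Hypothesis Hg : 0 < gamma <= 1.
Hypothesis HN : INR N <= / gamma < INR N + 1.
Variable Y : path H.
Hypothesis HY : truncated_rough_path H gamma N Y.

Lemma N_pos : (1 <= N)%nat.
Proof. assert (1 <= / gamma). { rewrite <- Rinv_1. apply Rinv_le_contravar; lra. }
  assert (0 < INR N) by lra. apply INR_lt in H0 || idtac. destruct N; [simpl in H1; lra|lia]. Qed.

Lemma theta_gt1 n : (N < n)%nat -> 1 < gamma * INR n.
Proof. intros Hn. assert (INR N + 1 <= INR n) by (rewrite <- S_INR; apply le_INR; lia).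
  apply Rmult_lt_reg_l with (/ gamma). apply Rinv_0_lt_compat; lra.
  rewrite <- Rmult_assoc, Rinv_l, Rmult_1_l, Rmult_1_r by lra. lra. Qed.

Lemma rp2_gt2 n : (N < n)%nat -> 2 < Rpower 2 (gamma * INR n).
Proof. intros Hn. pose proof (theta_gt1 n Hn). rewrite <- (Rpower_1 2) at 1 by lra. apply Rpower_lt; lra. Qed.

Lemma gn_pos n : (1 <= n)%nat -> 0 < gamma * INR n.
Proof. intros. apply Rmult_lt_0_compat. lra. apply lt_0_INR; lia. Qed.

Fixpoint Xf (k : nat) : path H :=
  match k with
  | O => Y
  | S k' => fun s t sg => if Nat.leb (cdeg sg) N then Y s t sg
            else Sew (gamma * INR (cdeg sg)) (fun s u t => red H (Xf k' s u) (Xf k' u t) sg) s t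
  end.

Definition X : path H := fun s t sg => Xf (cdeg sg) s t sg.

Lemma Xf_low k sg s t : (cdeg sg <= N)%nat -> Xf k s t sg = Y s t sg.
Proof. intros Hd. destruct k; simpl; auto. assert (E : Nat.leb (cdeg sg) N = true) by (apply Nat.leb_le; auto).
  rewrite E; auto. Qed.

Lemma X_low s t sg : (cdeg sg <= N)%nat -> X s t sg = Y s t sg.
Proof. intros; apply Xf_low; auto. Qed.

Lemma Xf_stable : forall d k (sg : B) s t, cdeg sg = d -> (d <= k)%nat -> Xf k s t sg = X s t sg.
Proof. intros d. induction d as [d IH] using lt_wf_ind. intros k sg s t Ed Hk.
  destruct (le_lt_dec (cdeg sg) N) as [Hl|Hl]. rewrite Xf_low, X_low; auto.
  unfold X. destruct k as [|k]; [lia|]. destruct (cdeg sg) as [|d'] eqn:Edg; [lia|].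
  simpl. rewrite Edg. assert (E : Nat.leb (S d') N = false) by (apply Nat.leb_gt; auto). rewrite E.
  f_equal. apply functional_extensionality; intro s0. apply functional_extensionality; intro u.
  apply functional_extensionality; intro t0. apply red_ext. intros a Ha.
  split; rewrite (IH (cdeg a)) with (k := k), (IH (cdeg a)) with (k := d'); auto; lia. Qed.

Lemma X_high (sg : B) s t : (N < cdeg sg)%nat ->
  X s t sg = Sew (gamma * INR (cdeg sg)) (fun s u t => red H (X s u) (X u t) sg) s t.
Proof. intros Hd. unfold X at 1. destruct (cdeg sg) as [|d'] eqn:Edg; [lia|].
  simpl. rewrite Edg. assert (E : Nat.leb (S d') N = false) by (apply Nat.leb_gt; auto). rewrite E.
  f_equal. apply functional_extensionality; intro s0. apply functional_extensionality; intro u.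
  apply functional_extensionality; intro t0. apply red_ext. intros a Ha.
  split; apply (Xf_stable (cdeg a)); auto; lia. Qed.

Lemma Y_one s t : Y s t cone = 1.
Proof. destruct HY as [H1 _]; auto. Qed.

Lemma X_one s t : X s t cone = 1.
Proof. rewrite X_low. apply Y_one. rewrite cone_deg; lia. Qed.

Lemma Y_chen (sg : B) s u t : (cdeg sg <= N)%nat -> Y s t sg = conv H (Y s u) (Y u t) sg.
Proof. intros Hd. destruct HY as [_ [_ [Hc _]]]. rewrite <- (Hc s u t sg Hd). apply chen_sum_conv. Qed.

Lemma X_chen_low (sg : B) s u t : (cdeg sg <= N)%nat -> X s t sg = conv H (X s u) (X u t) sg.
Proof. intros Hd. rewrite X_low, (Y_chen sg s u t) by auto. apply conv_ext. intros a Ha.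
  rewrite !X_low by lia. auto. Qed.

Lemma Y_ss (sg : B) s : (1 <= cdeg sg <= N)%nat -> Y s s sg = 0.
Proof. intros Hd. apply (ss_zero H (Y s s) N); auto. apply Y_one. intros. apply Y_chen; auto. Qed.

Lemma c_exists : exists c, 1 <= c /\ forall sg : B, (1 <= cdeg sg <= N)%nat -> forall s t, s <> t ->
  Rabs (Y s t sg) <= c * qchar H sg * powR (Rabs (t - s)) (gamma * INR (cdeg sg)).
Proof.
  assert (G : forall l : list B, exists c, 1 <= c /\ forall sg, In sg l -> (1 <= cdeg sg <= N)%nat -> forall s t, s <> t ->
    Rabs (Y s t sg) <= c * qchar H sg * powR (Rabs (t - s)) (gamma * INR (cdeg sg))).
  { induction l as [|sg l IH]. exists 1; split; [lra|]. intros sg [].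
    destruct IH as [c0 [Hc0 IH]].
    destruct (le_lt_dec 1 (cdeg sg)) as [H1|H1]; [destruct (le_lt_dec (cdeg sg) N) as [H2|H2]|].
    - destruct HY as [_ [_ [_ Hh]]]. destruct (Hh sg H2) as [K HK].
      pose proof (qchar_pos H sg Hnd H1) as Hq.
      exists (Rmax c0 (Rabs K / qchar H sg)). split. eapply Rle_trans; [apply Hc0|apply Rmax_l].
      intros x [Ex|Hx] Hd s t Hst.
      + subst x. eapply Rle_trans; [apply HK; auto|]. apply Rmult_le_compat_r. apply powR_nonneg.
        apply Rle_trans with (Rabs K / qchar H sg * qchar H sg). unfold Rdiv. rewrite Rmult_assoc, Rinv_l, Rmult_1_r by lra.
        apply Rle_abs. apply Rmult_le_compat_r; [lra|apply Rmax_r].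
      + eapply Rle_trans; [apply IH; auto|]. apply Rmult_le_compat_r. apply powR_nonneg.
        apply Rmult_le_compat_r. apply qchar_nonneg. apply Rmax_l.
    - exists c0. split; auto. intros x [Ex|Hx] Hd; [subst x; lia|]. apply IH; auto.
    - exists c0. split; auto. intros x [Ex|Hx] Hd; [subst x; lia|]. apply IH; auto. }
  destruct (G (All H N)) as [c [Hc Hc']]. exists c. split; auto. intros sg Hd. apply Hc'; auto.
  apply In_All; lia. Qed.

Definition qg := qgamma H gamma N.

Lemma qg_nonneg (sg : B) : 0 <= qg sg.
Proof. apply qgamma_nonneg. apply rp2_gt2. Qed.

Section WithC.
Variable c : R.
Hypothesis Hc1 : 1 <= c.
Hypothesis Hc : forall sg : B, (1 <= cdeg sg <= N)%nat -> forall s t, s <> t ->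
  Rabs (Y s t sg) <= c * qchar H sg * powR (Rabs (t - s)) (gamma * INR (cdeg sg)).

Definition Good (n : nat) : Prop := forall sg : B, cdeg sg = n ->
  (forall s u t, X s t sg = conv H (X s u) (X u t) sg) /\
  (forall s t, Rabs (X s t sg) <= c ^ n * qg sg * powR (Rabs (t - s)) (gamma * INR n)).

Lemma cpow_ge1 n : 1 <= c ^ n.
Proof. apply pow_R1_Rle; lra. Qed.

Lemma good_low n : (n <= N)%nat -> Good n.
Proof. intros Hn sg Ed. split. intros; apply X_chen_low; lia.
  intros s t. rewrite X_low by lia. unfold qg. rewrite qgamma_unfold.
  assert (E : Nat.leb (cdeg sg) N = true) by (apply Nat.leb_le; lia). rewrite E.
  destruct (Nat.eq_dec n 0) as [E0|E0].
  - subst n. assert (sg = cone) by (apply cdeg_zero; auto). subst. rewrite Y_one, qchar_unfold.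
    rewrite cone_deg. simpl. rewrite Rmult_0_r, powR_0r, Rabs_R1. lra.
  - destruct (Req_dec s t) as [<-|Hst].
    + rewrite Y_ss by lia. rewrite Rabs_R0. apply Rmult_le_pos. apply Rmult_le_pos.
      apply pow_le; lra. apply qchar_nonneg. apply powR_nonneg.
    + eapply Rle_trans; [apply Hc; auto; lia|]. rewrite Ed. apply Rmult_le_compat_r. apply powR_nonneg.
      apply Rmult_le_compat_r. apply qchar_nonneg. destruct n; [lia|]. simpl.
      pose proof (cpow_ge1 n). nra. Qed.

Lemma midpoint_abs s t : Rabs ((s + t) / 2 - s) = Rabs (t - s) / 2 /\ Rabs (t - (s + t) / 2) = Rabs (t - s) / 2.
Proof. split; rewrite <- (Rabs_right 2) at 2 by lra; unfold Rdiv; rewrite <- Rabs_Rinv by lra;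
  rewrite <- Rabs_mult; f_equal; field. Qed.

Lemma term_bound (a b : B) (x y : R) (Fa Gb : R) n :
  a <> cone -> b <> cone -> (cdeg a + cdeg b)%nat = n -> 0 <= x -> 0 <= y ->
  Rabs Fa <= c ^ cdeg a * qg a * powR x (gamma * INR (cdeg a)) ->
  Rabs Gb <= c ^ cdeg b * qg b * powR y (gamma * INR (cdeg b)) ->
  Rabs Fa * Rabs Gb <= c ^ n * (qg a * qg b) * (powR (x + y) (gamma * INR n)).
Proof. intros Ha Hb En Hx Hy HF HG. pose proof (not_cone_deg H a Ha). pose proof (not_cone_deg H b Hb).
  eapply Rle_trans. apply Rmult_le_compat; try apply Rabs_pos; eauto.
  assert (E : gamma * INR n = gamma * INR (cdeg a) + gamma * INR (cdeg b)) by (rewrite <- En, plus_INR; ring).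
  rewrite E, powR_plus by (try lra; apply gn_pos; lia). rewrite <- En, pow_add.
  assert (P1 : powR x (gamma * INR (cdeg a)) <= powR (x + y) (gamma * INR (cdeg a))) by (apply powR_mono; [lra|apply gn_pos; lia]).
  assert (P2 : powR y (gamma * INR (cdeg b)) <= powR (x + y) (gamma * INR (cdeg b))) by (apply powR_mono; [lra|apply gn_pos; lia]).
  pose proof (qg_nonneg a). pose proof (qg_nonneg b). pose proof (cpow_ge1 (cdeg a)). pose proof (cpow_ge1 (cdeg b)).
  pose proof (powR_nonneg x (gamma * INR (cdeg a))). pose proof (powR_nonneg y (gamma * INR (cdeg b))).
  assert (0 <= c ^ cdeg a * qg a) by nra. assert (0 <= c ^ cdeg b * qg b) by nra.
  replace (c ^ cdeg a * c ^ cdeg b * (qg a * qg b) * (powR (x + y) (gamma * INR (cdeg a)) * powR (x + y) (gamma * INR (cdeg b))))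
    with ((c ^ cdeg a * qg a * powR (x + y) (gamma * INR (cdeg a))) * (c ^ cdeg b * qg b * powR (x + y) (gamma * INR (cdeg b)))) by ring.
  apply Rmult_le_compat; try (apply Rmult_le_pos; auto; apply powR_nonneg); apply Rmult_le_compat_l; auto. Qed.

Lemma term_bound2 (a b : B) (x : R) (Fa Gb : R) n :
  a <> cone -> b <> cone -> (cdeg a + cdeg b)%nat = n -> 0 <= x ->
  Rabs Fa <= c ^ cdeg a * qg a * powR x (gamma * INR (cdeg a)) ->
  Rabs Gb <= c ^ cdeg b * qg b * powR x (gamma * INR (cdeg b)) ->
  Rabs Fa * Rabs Gb <= c ^ n * (qg a * qg b) * (powR x (gamma * INR n)).
Proof. intros Ha Hb En Hx HF HG. pose proof (not_cone_deg H a Ha). pose proof (not_cone_deg H b Hb).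
  eapply Rle_trans. apply Rmult_le_compat; try apply Rabs_pos; eauto.
  assert (E : gamma * INR n = gamma * INR (cdeg a) + gamma * INR (cdeg b)) by (rewrite <- En, plus_INR; ring).
  rewrite E, powR_plus by (try lra; apply gn_pos; lia). rewrite <- En, pow_add. right; ring. Qed.

Lemma good_all : forall n, Good n.
Proof. intros n. induction n as [n IH] using lt_wf_ind.
  destruct (le_lt_dec n N) as [Hn|Hn]; [apply good_low; auto|].
  intros sg Ed. set (th := gamma * INR n). assert (Hth : 1 < th) by (apply theta_gt1; auto).
  assert (Hsg : sg <> cone) by (intros ->; rewrite cone_deg in Ed; lia).
  set (C := fun s u t => red H (X s u) (X u t) sg).
  assert (Low : forall a : B, (cdeg a < n)%nat -> (forall s u t, X s t a = conv H (X s u) (X u t) a) /\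
     (forall s t, Rabs (X s t a) <= c ^ cdeg a * qg a * powR (Rabs (t - s)) (gamma * INR (cdeg a)))).
  { intros a Ha. apply (IH (cdeg a) Ha a eq_refl). }
  assert (Hcoc : cocycle C).
  { intros s u v t. unfold C. apply cocycle_red; auto using X_one.
    intros a Ha. split; apply Low; lia. }
  set (M := c ^ n * red H qg qg sg).
  assert (HM : 0 <= M) by (apply Rmult_le_pos; [apply pow_le; lra|apply red_nonneg; intros; apply qg_nonneg]).
  assert (HCb : forall s u t, Rabs (C s u t) <= M * powR (Rabs (u - s) + Rabs (t - u)) th).
  { intros s u t. unfold C, M. apply red_bound. apply qg_nonneg. apply pow_le; lra. apply powR_nonneg.
    intros a b Ha Hb Eab. rewrite Ed in Eab. apply term_bound; auto; try apply Rabs_pos.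
    apply Low. pose proof (not_cone_deg H b Hb); lia. apply Low. pose proof (not_cone_deg H a Ha); lia. }
  destruct (sewing C M th Hth HM Hcoc HCb) as [Phi HPhi].
  assert (Spec := epsilon_spec (inhabits (fun _ _ : R => 0)) (fun Phi => (forall s u t, Phi s t = Phi s u + Phi u t + C s u t) /\
    exists K, 0 <= K /\ forall s t, Rabs (Phi s t) <= K * powR (Rabs (t - s)) th) (ex_intro _ Phi HPhi)).
  fold (Sew th C) in Spec. destruct Spec as [SChen [K [HK SBd]]].
  assert (XE : forall s t, X s t sg = Sew th C s t).
  { intros s t. rewrite X_high by lia. rewrite Ed. reflexivity. }
  assert (Chen : forall s u t, X s t sg = conv H (X s u) (X u t) sg).
  { intros s u t. rewrite conv_decomp by auto. rewrite !X_one, !XE. rewrite (SChen s u t). unfold C. ring. }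
  split; auto.
  set (A := M * sw_q th).
  assert (HA : 0 <= A) by (unfold A; apply Rmult_le_pos; auto; pose proof (q_spec th Hth); lra).
  assert (Bd := bootstrap (fun s t => X s t sg) th K A Hth HK HA).
  assert (Bd1 : forall s t, Rabs (X s t sg) <= K * powR (Rabs (t - s)) th) by (intros; rewrite XE; apply SBd).
  assert (Bd2 : forall s t, Rabs (X s t sg) <= Rabs (X s ((s + t) / 2) sg) + Rabs (X ((s + t) / 2) t sg) + A * powR (Rabs (t - s)) th).
  { intros s t. set (m := (s + t) / 2). rewrite !XE. rewrite (SChen s m t). rewrite <- !XE.
    eapply Rle_trans; [apply Rabs_triang|]. apply Rplus_le_compat. apply Rabs_triang.
    destruct (midpoint_abs s t) as [E1 E2]. fold m in E1, E2.
    assert (Ph : powR (Rabs (t - s) / 2) th = sw_q th * powR (Rabs (t - s)) th).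
    { unfold Rdiv. rewrite Rmult_comm, powR_mult; [reflexivity|lra|apply Rabs_pos|lra]. }
    unfold A. rewrite Rmult_assoc, <- Ph. unfold C, M. apply red_bound. apply qg_nonneg. apply pow_le; lra. apply powR_nonneg.
    intros a b Ha Hb Eab. rewrite Ed in Eab. unfold th. apply term_bound2; auto. pose proof (Rabs_pos (t - s)); lra.
    rewrite <- E1. apply (proj2 (Low a ltac:(pose proof (not_cone_deg H b Hb); lia))).
    rewrite <- E2. apply (proj2 (Low b ltac:(pose proof (not_cone_deg H a Ha); lia))). }
  intros s t. eapply Rle_trans; [apply Bd; auto|]. right. f_equal.
  unfold qg at 1. rewrite qgamma_unfold. assert (E : Nat.leb (cdeg sg) N = false) by (apply Nat.leb_gt; lia). rewrite E.
  fold qg. rewrite Ed. fold th. unfold A, M, sw_r. unfold sw_q. rewrite powR_nz by lra.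
  assert (E2 : Rpower (/ 2) th * Rpower 2 th = 1).
  { rewrite Rpower_mult_distr by lra. replace (/2 * 2) with 1 by field. unfold Rpower. rewrite ln_1, Rmult_0_r. apply exp_0. }
  assert (2 < Rpower 2 th) by (apply rp2_gt2; auto).
  assert (Eq : Rpower (/ 2) th = / Rpower 2 th).
  { apply Rmult_eq_reg_r with (Rpower 2 th). rewrite E2, Rinv_l; lra. lra. }
  rewrite Eq. field. split; lra.
Qed.

Lemma mult_all : forall n (a b : B), (cdeg a + cdeg b)%nat = n -> forall s t,
  rsum (All H n) (fun z => INR (cmul a b z) * X s t z) = X s t a * X s t b.
Proof. intros n. induction n as [n IH] using lt_wf_ind. intros a b En s t.
  destruct (cB_eq_dec a cone) as [->|Ha].
  { rewrite (All_delta H n _ b). rewrite cmul_unit_l. dd. rewrite X_one. ring. rewrite cone_deg in En; lia.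
    intros z Hz. rewrite cmul_unit_l. dd. }
  destruct (cB_eq_dec b cone) as [->|Hb].
  { rewrite (All_delta H n _ a). rewrite cmul_unit_r. dd. rewrite X_one. ring. rewrite cone_deg in En; lia.
    intros z Hz. rewrite cmul_unit_r. dd. }
  destruct (le_lt_dec n N) as [Hn|Hn].
  - destruct HY as [_ [Hm _]]. specialize (Hm s t a b ltac:(cbv beta; lia)). rewrite !X_low by lia.
    rewrite (rsum_All_graded H n n) by (auto; intros z Hz; rewrite cmul_R0 by lia; ring).
    rewrite <- Hm, En. apply rsum_ext. intros z Hz. apply cenum_spec in Hz. rewrite X_low by lia. auto.
  - set (th := gamma * INR n). assert (Hth : 1 < th) by (apply theta_gt1; auto).
    set (Mf := fun s t => rsum (All H n) (fun z => INR (cmul a b z) * X s t z) - X s t a * X s t b).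
    assert (Hadd : forall s u t, Mf s t = Mf s u + Mf u t).
    { intros s0 u t0. unfold Mf. subst n. apply mult_step; auto using X_one.
      - intros c0 Hc0. apply (good_all (cdeg c0)); auto.
      - intros x y Hxy. rewrite (rsum_All_mono H (cdeg x + cdeg y)); [apply IH; auto|lia|].
        intros z Hz. rewrite cmul_R0 by lia. ring.
      - intros x y Hxy. rewrite (rsum_All_mono H (cdeg x + cdeg y)); [apply IH; auto|lia|].
        intros z Hz. rewrite cmul_R0 by lia. ring. }
    set (K := rsum (All H n) (fun z => INR (cmul a b z) * (c ^ n * qg z)) + c ^ n * (qg a * qg b)).
    assert (HK : 0 <= K).
    { unfold K. apply Rplus_le_le_0_compat. apply rsum_nonneg; intros. apply Rmult_le_pos. apply pos_INR.
      apply Rmult_le_pos; [apply pow_le; lra|apply qg_nonneg].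
      apply Rmult_le_pos; [apply pow_le; lra|apply Rmult_le_pos; apply qg_nonneg]. }
    assert (Hb2 : forall s t, Rabs (Mf s t) <= K * powR (Rabs (t - s)) th).
    { intros s0 t0. unfold Mf, K. unfold Rminus. eapply Rle_trans; [apply Rabs_triang|]. rewrite Rabs_Ropp.
      rewrite Rmult_plus_distr_r. apply Rplus_le_compat.
      - eapply Rle_trans; [apply rsum_abs|]. rewrite <- rsum_scal_r. apply rsum_le. intros z Hz.
        rewrite Rabs_mult, (Rabs_right (INR _)) by (apply Rle_ge, pos_INR).
        destruct (Nat.eq_dec (cdeg z) n) as [Ez|Ez].
        + rewrite Rmult_assoc. apply Rmult_le_compat_l. apply pos_INR.
          destruct (good_all (cdeg z) z eq_refl) as [_ Bz]. rewrite Ez in Bz. apply Bz.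
        + rewrite cmul_R0 by lia. lra.
      - rewrite Rabs_mult. apply term_bound2; auto. apply Rabs_pos.
        apply (good_all (cdeg a) a eq_refl). apply (good_all (cdeg b) b eq_refl). }
    pose proof (additive_zero Mf K th Hth HK Hadd Hb2 s t). unfold Mf in H0. lra.
Qed.

Lemma unique_ext (X' : path H) : rough_path H gamma X' -> extends H N X' Y ->
  forall n (sg : B), cdeg sg = n -> forall s t, X' s t sg = X s t sg.
Proof. intros [H1 [_ [Hc2 Hh]]] Hext n. induction n as [n IH] using lt_wf_ind. intros sg Ed s t.
  assert (Ch' : forall sg s u t, X' s t sg = conv H (X' s u) (X' u t) sg).
  { intros. rewrite <- (Hc2 s0 u t0 sg0 I). apply chen_sum_conv. }
  destruct (le_lt_dec n N) as [Hn|Hn].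
  { rewrite Hext, X_low by lia. auto. }
  assert (Hsg : sg <> cone) by (intros ->; rewrite cone_deg in Ed; lia).
  set (th := gamma * INR n). assert (Hth : 1 < th) by (apply theta_gt1; auto).
  set (D := fun s t => X' s t sg - X s t sg).
  assert (Hadd : forall s u t, D s t = D s u + D u t).
  { intros s0 u t0. unfold D. rewrite (Ch' sg s0 u t0). destruct (good_all n sg Ed) as [Chx _].
    rewrite (Chx s0 u t0). rewrite !conv_decomp by auto. rewrite !H1, !X_one.
    rewrite (red_ext H (X' s0 u) (X' u t0) (X s0 u) (X u t0)). ring.
    intros a Ha. split; apply (IH (cdeg a)); auto; lia. }
  destruct (Hh sg I) as [K' HK'].
  destruct (good_all n sg Ed) as [_ Bx].
  set (K := Rabs K' + c ^ n * qg sg).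
  assert (HK : 0 <= K) by (unfold K; pose proof (Rabs_pos K'); assert (0 <= c ^ n * qg sg) by (apply Rmult_le_pos; [apply pow_le; lra|apply qg_nonneg]); lra).
  assert (Hss : forall s, X' s s sg = 0).
  { intros s0. apply (ss_zero H (X' s0 s0) (cdeg sg)). apply H1. intros; apply Ch'. pose proof (not_cone_deg H sg Hsg); lia. }
  assert (Hb : forall s t, Rabs (D s t) <= K * powR (Rabs (t - s)) th).
  { intros s0 t0. unfold D. destruct (Req_dec s0 t0) as [<-|Hst].
    - rewrite Hss. pose proof (Bx s0 s0). rewrite Rminus_diag, Rabs_R0 in *. unfold th.
      rewrite powR_0 in * by (pose proof (gn_pos n ltac:(lia)); lra). rewrite Rmult_0_r in *.
      rewrite Rminus_0_l, Rabs_Ropp. lra.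
    - unfold Rminus at 1. eapply Rle_trans; [apply Rabs_triang|]. rewrite Rabs_Ropp. unfold K.
      rewrite Rmult_plus_distr_r. apply Rplus_le_compat.
      + eapply Rle_trans; [apply HK'; auto|]. rewrite Ed. apply Rmult_le_compat_r. apply powR_nonneg. apply Rle_abs.
      + apply Bx. }
  pose proof (additive_zero D K th Hth HK Hadd Hb s t). unfold D in H0. lra.
Qed.

End WithC.
End Main.

Open Scope R_scope.

Theorem mainTheorem3 (H : CHA) (gamma : R) (N : nat) :
  commutativeCHA H -> nondegenerate H ->
  0 < gamma <= 1 ->
  INR N <= / gamma < INR N + 1 ->   (* N = floor(1/gamma) *)
  forall Y : path H, truncated_rough_path H gamma N Y ->
  exists X : path H,
    rough_path H gamma X /\ extends H N X Y /\
    (forall X' : path H, rough_path H gamma X' -> extends H N X' Y ->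
       forall s t sg, X' s t sg = X s t sg) /\
    (exists c : R, 0 < c /\
       forall s t (sg : cB H),
         Rabs (X s t sg) <= c ^ (cdeg sg) * qgamma H gamma N sg
                            * powR (Rabs (t - s)) (gamma * INR (cdeg sg))).
Proof.
  intros _ Hnd Hg HN Y HY.
  destruct (c_exists H gamma N Hnd Y HY) as [c [Hc1 Hc]].
  pose proof (good_all H gamma N Hg HN Y HY c Hc1 Hc) as G.
  exists (X H gamma N Y). split; [|split; [|split]].
  - split; [|split; [|split]].
    + intros; apply X_one; auto.
    + intros s t a b _. rewrite <- (mult_all H gamma N Hg HN Y HY c Hc1 Hc (cdeg a + cdeg b) a b eq_refl s t).
      rewrite (rsum_All_graded H (cdeg a + cdeg b) (cdeg a + cdeg b)); auto.
      intros z Hz. rewrite cmul_R0 by lia. ring.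
    + intros s u t sg _. rewrite chen_sum_conv. symmetry. apply (G (cdeg sg) sg eq_refl).
    + intros sg _. exists (c ^ cdeg sg * qg H gamma N sg). intros s t _. apply (G (cdeg sg) sg eq_refl).
  - intros s t sg Hd. apply X_low; auto.
  - intros X' HX' Hext s t sg. apply (unique_ext H gamma N Hg HN Y HY c Hc1 Hc X' HX' Hext (cdeg sg) sg eq_refl).
  - exists c. split; [lra|]. intros s t sg. apply (G (cdeg sg) sg eq_refl).
Qed.
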